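(* For every $\mathbf U\in\mathcal E([0,T];\mathcal A_X^{\otimes2})$, $$\|\delta^X(\mathbf U)\|_{L^2(\varphi)}\le\|\mathbf U\|_{\mathbb D^{1,2}(\mathcal H)},$$ where $\|\mathbf U\|_{\mathbb D^{1,2}(\mathcal H)}^2:=\|\mathbf U\|^2_{L^2(\varphi\times\varphi;\mathcal H)}+\|D^X_1\mathbf U\|^2_{L^2(\varphi\times\varphi\times\varphi;\mathcal H\otimes\mathcal H)}+\|D^X_2\mathbf U\|^2_{L^2(\varphi\times\varphi\times\varphi;\mathcal H\otimes\mathcal H)}$.
   Context: NC probability space: a pair $(\mathcal A,\varphi)$ with $\mathcal A$ a unital complex Banach $*$-algebra with $\|XY\|\le\|X\|\|Y\|$, $\|X^*X\|=\|X\|^2$, and $\varphi$ a linear functional with $\varphi(1)=1$, $\varphi(XY)=\varphi(YX)$, $\varphi(X^*X)\ge0$, $\varphi(X^*X)=0\Rightarrow X=0$; $\|Z\|_{L^2(\varphi)}:=\varphi(ZZ^* )^{1/2}$. For $k\ge2$, $\mathcal A^{\otimes k}$ is the algebraic tensor product with componentwise product, involution $(F_1\otimes\cdots\otimes F_k)^*=F_1^*\otimes\cdots\otimes F_k^*$, and $\varphi^{\times k}(F_1\otimes\cdots\otimes F_k)=\varphi(F_1)\cdots\varphi(F_k)$, extended linearly. $(F_1\otimes F_2)\sharp G:=F_1GF_2$, $(\mathrm{Id}\times\varphi\times\mathrm{Id})(F_1\otimes F_2\otimes F_3):=\varphi(F_2)F_1F_3$. A centered semicircular process $\{X_t\}_{t\in[0,T]}$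 is a family of self-adjoint elements with $\varphi(X_{t_1}\cdots X_{t_r})=\sum_{\pi\in NC_2(r)}\prod_{\{p,q\}\in\pi}\varphi(X_{t_p}X_{t_q})$ for even $r$ (non-crossing pairings) and vanishing odd moments. Fix $T>0$ and such a process; $\mathcal A_X$ is the unital subalgebra generated by it. Step functions $h=\sum\alpha_i\mathbf 1_{[a_i,b_i)}$ form $\mathcal E([0,T];\mathbb R)$; $X(h):=\sum\alpha_i(X_{b_i}-X_{a_i})$; $\mathcal H$ is the completion of step functions for $\langle\mathbf 1_{[0,s]},\mathbf 1_{[0,t]}\rangle_{\mathcal H}=\varphi(X_sX_t)$. $\mathcal E([0,T];E)$: finite sums $\sum x_ih_i(t)$, $x_i\in E$; $\mathcal E([0,T]^2;E)$: finite sums $(s,t)\mapsto\sum x_ih_i(s)k_i(t)$. Pairings: $\langle xh,k\rangle_{\mathcal H}:=x\langle h,k\rangle_{\mathcal H}$, $\langle xh;yk\rangle_{\mathcal H}:=(x\cdot y)\langle h,k\rangle_{\mathcal H}$; $(\sum x_ih_i)^*:=\sum x_i^*h_i$. $D^X:\mathcal A_X\to\mathcal E([0,T];\mathcal A_X^{\otimes2})$: linear, $D^X1=0$, $D^X(X(h_1)\cdots X(h_m))=\sum_{i=1}^m[(X(h_1)\cdots X(h_{i-1}))\otimes(X(h_{i+1})\cdots X(h_m))]h_i$. $D^X_1(F_1\otimes F_2):=D^XF_1\otimes F_2$, $D^X_2(F_1\otimes F_2):=F_1\otimes D^XF_2$, $D^X:=D^X_1+D^X_2$. Divergence: $\delta^X(\mathbf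 Fh):=\mathbf F\sharp X(h)-(\mathrm{Id}\times\varphi\times\mathrm{Id})(\langle D^X\mathbf F,h\rangle_{\mathcal H})$, extended linearly to $\mathcal E([0,T];\mathcal A_X^{\otimes2})$. For $\mathbf U=\mathbf Fh\in\mathcal E([0,T];\mathcal A_X^{\otimes 2})$, $D^X_i\mathbf U\in\mathcal E([0,T]^2;\mathcal A_X^{\otimes3})$ denotes $(s,t)\mapsto h(s)\,(D^X_i\mathbf F)(t)$, extended linearly. Norms: $\|\mathbf U\|^2_{L^2(\varphi\times\varphi;\mathcal H)}:=(\varphi\times\varphi)(\langle\mathbf U;\mathbf U^*\rangle_{\mathcal H})$; for $\mathbb U\in\mathcal E([0,T]^2;\mathcal A_X^{\otimes3})$, $\|\mathbb U\|^2_{L^2(\varphi\times\varphi\times\varphi;\mathcal H\otimes\mathcal H)}:=(\varphi\times\varphi\times\varphi)(\langle\mathbb U,\mathbb U\rangle_{\mathcal H\otimes\mathcal H})$, where $\langle\mathbb F h(s)k(t),\mathbb G\ell(s)m(t)\rangle_{\mathcal H\otimes\mathcal H}:=(\mathbb F\cdot\mathbb G^* )\langle h,\ell\rangle_{\mathcal H}\langle k,m\rangle_{\mathcal H}$, extended sesquilinearly. *)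

(* Defs.v *)
From Stdlib Require Import Reals List Arith.
Import ListNotations.
Open Scope R_scope.

Record Cx := mkC { Re : R ; Im : R }.
Definition C0 : Cx := mkC 0 0.
Definition C1 : Cx := mkC 1 0.
Definition RC (r : R) : Cx := mkC r 0.
Definition Cadd (z w : Cx) : Cx := mkC (Re z + Re w) (Im z + Im w).
Definition Copp (z : Cx) : Cx := mkC (- Re z) (- Im z).
Definition Cmul (z w : Cx) : Cx :=
  mkC (Re z * Re w - Im z * Im w) (Re z * Im w + Im z * Re w).
Definition Cconj (z : Cx) : Cx := mkC (Re z) (- Im z).
Definition Cmod (z : Cx) : R := sqrt (Re z * Re z + Im z * Im z).
Definition csum (l : list Cx) : Cx := fold_right Cadd C0 l.
Definition cprod (l : list Cx) : Cx := fold_right Cmul C1 l.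

Record NCPS := {
  car :> Type;
  azero : car; aone : car;
  aadd : car -> car -> car; aopp : car -> car;
  asmul : Cx -> car -> car; amul : car -> car -> car;
  astar : car -> car; anorm : car -> R; phi : car -> Cx;
  ax_addA : forall x y z, aadd x (aadd y z) = aadd (aadd x y) z;
  ax_addC : forall x y, aadd x y = aadd y x;
  ax_add0 : forall x, aadd x azero = x;
  ax_addN : forall x, aadd x (aopp x) = azero;
  ax_smulA : forall a b x, asmul a (asmul b x) = asmul (Cmul a b) x;
  ax_smul1 : forall x, asmul C1 x = x;
  ax_smulDr : forall a x y, asmul a (aadd x y) = aadd (asmul a x) (asmul a y);
  ax_smulDl : forall a b x, asmul (Cadd a b) x = aadd (asmul a x) (asmul b x);
  ax_mulA : forall x y z, amul x (amul y z) = amul (amul x y) z;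
  ax_mul1l : forall x, amul aone x = x;
  ax_mul1r : forall x, amul x aone = x;
  ax_mulDl : forall x y z, amul (aadd x y) z = aadd (amul x z) (amul y z);
  ax_mulDr : forall x y z, amul x (aadd y z) = aadd (amul x y) (amul x z);
  ax_smulMl : forall a x y, asmul a (amul x y) = amul (asmul a x) y;
  ax_smulMr : forall a x y, asmul a (amul x y) = amul x (asmul a y);
  ax_starK : forall x, astar (astar x) = x;
  ax_starD : forall x y, astar (aadd x y) = aadd (astar x) (astar y);
  ax_starZ : forall a x, astar (asmul a x) = asmul (Cconj a) (astar x);
  ax_starM : forall x y, astar (amul x y) = amul (astar y) (astar x);
  ax_norm_ge0 : forall x, 0 <= anorm x;
  ax_norm_eq0 : forall x, anorm x = 0 -> x = azero;
  ax_normD : forall x y, anorm (aadd x y) <= anorm x + anorm y;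
  ax_normZ : forall a x, anorm (asmul a x) = Cmod a * anorm x;
  ax_normM : forall x y, anorm (amul x y) <= anorm x * anorm y;
  ax_normC : forall x, anorm (amul (astar x) x) = anorm x * anorm x;
  ax_complete : forall u : nat -> car,
    (forall eps, 0 < eps -> exists N, forall n m, (N <= n)%nat -> (N <= m)%nat ->
        anorm (aadd (u n) (aopp (u m))) < eps) ->
    exists l, forall eps, 0 < eps -> exists N, forall n, (N <= n)%nat ->
        anorm (aadd (u n) (aopp l)) < eps;
  ax_phiD : forall x y, phi (aadd x y) = Cadd (phi x) (phi y);
  ax_phiZ : forall a x, phi (asmul a x) = Cmul a (phi x);
  ax_phi1 : phi aone = C1;
  ax_phiT : forall x y, phi (amul x y) = phi (amul y x);
  ax_phi_pos : forall x, Im (phi (amul (astar x) x)) = 0 /\ 0 <= Re (phi (amul (astar x) x));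
  ax_phi_faithful : forall x, phi (amul (astar x) x) = C0 -> x = azero
}.

Arguments azero {_}. Arguments aone {_}.
Arguments aadd {_} _ _. Arguments aopp {_} _. Arguments asmul {_} _ _.
Arguments amul {_} _ _. Arguments astar {_} _. Arguments anorm {_} _. Arguments phi {_} _.

Section Defs.
Variable P : NCPS.

Definition asub (x y : P) : P := aadd x (aopp y).
Definition asum (l : list P) : P := fold_right aadd azero l.
Definition aprod (l : list P) : P := fold_right amul aone l.

(* ncp fuel l : the list of all non-crossing pairings of the (ordered) list l:
   the first element x is paired with some y such that the block strictly between
   them has even length; that block and the part after y are then paired
   non-crossingly and independently. Each pairing is produced exactly once. *)
Fixpoint ncp (fuel : nat) (l : list nat) : list (list (nat * nat)) :=
  match l with
  | [] => [[]]
  | x :: rest =>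
    match fuel with
    | O => []
    | S f =>
      flat_map (fun k =>
        if Nat.even k then
          match nth_error rest k with
          | Some y =>
              flat_map (fun p1 => map (fun p2 => (x, y) :: p1 ++ p2)
                                      (ncp f (skipn (S k) rest)))
                       (ncp f (firstn k rest))
          | None => []
          end
        else []) (seq 0 (length rest))
    end
  end.

Definition NC2 (r : nat) : list (list (nat * nat)) := ncp r (seq 0 r).

Definition semicircular (T : R) (X : R -> P) : Prop :=
  (forall t, 0 <= t <= T -> astar (X t) = X t) /\
  (forall ts : list R, Forall (fun t => 0 <= t <= T) ts ->
     phi (aprod (map X ts)) =
       if Nat.even (length ts) then
         csum (map (fun pi => cprod (map (fun pq =>
                   phi (amul (X (nth (fst pq) ts 0)) (X (nth (snd pq) ts 0)))) pi))
                   (NC2 (length ts)))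
       else C0).

Variable X : R -> P.

(* step functions h = sum alpha_i 1_[a_i,b_i), stored as (alpha_i, a_i, b_i) *)
Definition step := list (R * R * R).
Definition step_ok (T : R) (h : step) : Prop :=
  Forall (fun x => match x with (al, a, b) => 0 <= a /\ a <= b /\ b <= T end) h.

Definition Xh (h : step) : P :=
  asum (map (fun x => match x with (al, a, b) =>
              asmul (RC al) (asub (X b) (X a)) end) h).

(* <1_[0,s], 1_[0,t]>_H = phi(X_s X_t), extended bilinearly to step functions *)
Definition Kov (s t : R) : Cx := phi (amul (X s) (X t)).
Definition ipH (h k : step) : Cx :=
  csum (flat_map (fun x => match x with (al, a, b) =>
    map (fun y => match y with (be, c, d) =>
      Cmul (RC (al * be))
        (Cadd (Cadd (Kov b d) (Copp (Kov b c))) (Cadd (Copp (Kov a d)) (Kov a c)))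
    end) k end) h).

(* monomials X(h_1)...X(h_m), represented by the word [h_1;...;h_m] *)
Definition word := list step.
Definition ev (w : word) : P := aprod (map Xh w).

(* An element U = sum_k c_k (m1_k (x) m2_k) h_k of E([0,T]; A_X (x) A_X),
   with m1_k, m2_k monomials: list of (c_k, m1_k, m2_k, h_k). *)
Definition Uelt := list (Cx * word * word * step).

(* D^X(X(h_1)...X(h_m)) = sum_i [prefix_i (x) suffix_i] h_i *)
Definition DXw (w : word) : list (word * word * step) :=
  map (fun i => (firstn i w, skipn (S i) w, nth i w [])) (seq 0 (length w)).

(* D^X_1 and D^X_2 of c (m1 (x) m2): lists of (c, a, b, d, k) meaning c (a (x) b (x) d) k *)
Definition D1F (c : Cx) (m1 m2 : word) : list (Cx * word * word * word * step) :=
  map (fun x => match x with (p, s, k) => (c, p, s, m2, k) end) (DXw m1).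
Definition D2F (c : Cx) (m1 m2 : word) : list (Cx * word * word * word * step) :=
  map (fun x => match x with (p, s, k) => (c, m1, p, s, k) end) (DXw m2).

(* delta^X(F h) = F # X(h) - (Id x phi x Id)(<D^X F, h>_H) *)
Definition delta_term (t : Cx * word * word * step) : P :=
  match t with (c, m1, m2, h) =>
    asub (asmul c (amul (amul (ev m1) (Xh h)) (ev m2)))
         (asum (map (fun y => match y with (c', a, b, d, k) =>
                  asmul (Cmul c' (ipH k h)) (asmul (phi (ev b)) (amul (ev a) (ev d))) end)
                (D1F c m1 m2 ++ D2F c m1 m2)))
  end.
Definition deltaX (U : Uelt) : P := asum (map delta_term U).

Definition L2norm (Z : P) : R := sqrt (Re (phi (amul Z (astar Z)))).

(* ||U||^2_{L^2(phi x phi; H)} = (phi x phi)(<U ; U^star>_H) *)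
Definition normU2 (U : Uelt) : Cx :=
  csum (flat_map (fun x => match x with (c, a, b, h) =>
    map (fun y => match y with (c', a', b', h') =>
      Cmul (ipH h h')
        (Cmul (Cmul c (Cconj c'))
              (Cmul (phi (amul (ev a) (astar (ev a')))) (phi (amul (ev b) (astar (ev b'))))))
    end) U end) U).

(* elements of E([0,T]^2; A_X^{(x)3}): (c, a, b, d, h, k) meaning (s,t) |-> c (a (x) b (x) d) h(s) k(t) *)
Definition Velt := list (Cx * word * word * word * step * step).

(* D^X_i U : (s,t) |-> h(s) (D^X_i F)(t) *)
Definition D1U (U : Uelt) : Velt :=
  flat_map (fun x => match x with (c, m1, m2, h) =>
    map (fun y => match y with (c', a, b, d, k) => (c', a, b, d, h, k) end) (D1F c m1 m2) end) U.
Definition D2U (U : Uelt) : Velt :=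
  flat_map (fun x => match x with (c, m1, m2, h) =>
    map (fun y => match y with (c', a, b, d, k) => (c', a, b, d, h, k) end) (D2F c m1 m2) end) U.

Definition normV2 (V : Velt) : Cx :=
  csum (flat_map (fun x => match x with (c, a, b, d, hs, ht) =>
    map (fun y => match y with (c', a', b', d', hs', ht') =>
      Cmul (Cmul (ipH hs hs') (ipH ht ht'))
        (Cmul (Cmul c (Cconj c'))
          (Cmul (phi (amul (ev a) (astar (ev a'))))
            (Cmul (phi (amul (ev b) (astar (ev b')))) (phi (amul (ev d) (astar (ev d')))))))
    end) V end) V).

Definition D12norm (U : Uelt) : R :=
  sqrt (Re (normU2 U) + Re (normV2 (D1U U)) + Re (normV2 (D2U U))).

Definition Uelt_ok (T : R) (U : Uelt) : Prop :=
  Forall (fun x => match x with (c, m1, m2, h) =>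
    step_ok T h /\ Forall (step_ok T) m1 /\ Forall (step_ok T) m2 end) U.

End Defs.

(* Main.v *)
From Stdlib Require Import Reals List Lra Lia Ring Field Arith.
Require Import Defs.
Import ListNotations.
Open Scope R_scope.

Module A2.

Lemma Cx_ext z w : Re z = Re w -> Im z = Im w -> z = w.
Proof. destruct z, w; simpl; intros; subst; reflexivity. Qed.

Definition Csub z w := Cadd z (Copp w).
Lemma Cx_ring : ring_theory C0 C1 Cadd Cmul Csub Copp (@eq Cx).
Proof. constructor; intros; apply Cx_ext; simpl; ring. Qed.
Add Ring CxRing : Cx_ring.

Lemma Cadd0r x : Cadd x C0 = x.
Proof. ring. Qed.
Lemma Cadd0l x : Cadd C0 x = x.
Proof. ring. Qed.

Definition sm {A} (l : list A) (f : A -> Cx) : Cx := csum (map f l).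

Lemma sm_nil {A} (f : A -> Cx) : sm [] f = C0.
Proof. reflexivity. Qed.
Lemma sm_cons {A} (f : A -> Cx) x l : sm (x :: l) f = Cadd (f x) (sm l f).
Proof. reflexivity. Qed.
Lemma sm_app {A} (f : A -> Cx) l1 l2 : sm (l1 ++ l2) f = Cadd (sm l1 f) (sm l2 f).
Proof. induction l1; unfold sm in *; simpl; [ring| rewrite IHl1; ring]. Qed.
Lemma sm_map {A B} (g : A -> B) (f : B -> Cx) l : sm (map g l) f = sm l (fun x => f (g x)).
Proof. unfold sm; now rewrite map_map. Qed.
Lemma sm_flat_map {A B} (g : A -> list B) (f : B -> Cx) l :
  sm (flat_map g l) f = sm l (fun x => sm (g x) f).
Proof. induction l; [reflexivity|]. simpl flat_map. rewrite sm_app, sm_cons, IHl. reflexivity. Qed.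
Lemma sm_ext {A} (f g : A -> Cx) l : (forall x, In x l -> f x = g x) -> sm l f = sm l g.
Proof. intros H; induction l; [reflexivity|]. rewrite !sm_cons. f_equal.
  - apply H; now left.
  - apply IHl; intros; apply H; now right. Qed.
Lemma sm_add {A} (f g : A -> Cx) l : sm l (fun x => Cadd (f x) (g x)) = Cadd (sm l f) (sm l g).
Proof. induction l; [cbn; ring|]. rewrite !sm_cons, IHl; ring. Qed.
Lemma sm_scal {A} c (f : A -> Cx) l : sm l (fun x => Cmul c (f x)) = Cmul c (sm l f).
Proof. induction l; [cbn; ring|]. rewrite !sm_cons, IHl; ring. Qed.
Lemma sm_scalr {A} c (f : A -> Cx) l : sm l (fun x => Cmul (f x) c) = Cmul (sm l f) c.
Proof. induction l; [cbn; ring|]. rewrite !sm_cons, IHl; ring. Qed.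
Lemma sm_opp {A} (f : A -> Cx) l : sm l (fun x => Copp (f x)) = Copp (sm l f).
Proof. induction l; [cbn; ring|]. rewrite !sm_cons, IHl; ring. Qed.
Lemma sm_zero {A} (l : list A) : sm l (fun _ => C0) = C0.
Proof. induction l; [reflexivity|]. rewrite sm_cons, IHl; ring. Qed.
Lemma sm_swap {A B} (f : A -> B -> Cx) l1 l2 :
  sm l1 (fun x => sm l2 (fun y => f x y)) = sm l2 (fun y => sm l1 (fun x => f x y)).
Proof.
  induction l1; simpl.
  - rewrite sm_nil. symmetry. apply sm_zero.
  - rewrite sm_cons, IHl1. rewrite <- sm_add. apply sm_ext. intros; rewrite sm_cons; reflexivity.
Qed.
Lemma csum_map_sm {A} (f : A -> Cx) l : csum (map f l) = sm l f.
Proof. reflexivity. Qed.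
Lemma csum_sm l : csum l = sm l (fun x => x).
Proof. unfold sm; now rewrite map_id. Qed.

Fixpoint splits {A} (l : list A) : list (list A * A * list A) :=
  match l with
  | [] => []
  | x :: r => ([], x, r) :: map (fun t => match t with (p, y, s) => (x :: p, y, s) end) (splits r)
  end.

Lemma splits_app {A} (l1 l2 : list A) :
  splits (l1 ++ l2) = map (fun t => match t with (p, x, s) => (p, x, s ++ l2) end) (splits l1)
                   ++ map (fun t => match t with (p, x, s) => (l1 ++ p, x, s) end) (splits l2).
Proof.
  induction l1 as [|a l1 IH]; simpl.
  - rewrite map_ext with (g := fun t => t). now rewrite map_id. intros [[p x] s]; reflexivity.
  - f_equal. rewrite IH, map_app, !map_map. f_equal; apply map_ext; intros [[p x] s]; reflexivity.
Qed.

Lemma splits_seq {A} (l : list A) d :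
  map (fun k => (firstn k l, nth k l d, skipn (S k) l)) (seq 0 (length l)) = splits l.
Proof.
  induction l as [|a l IH]; [reflexivity|]. simpl length. simpl seq. rewrite <- seq_shift. simpl.
  f_equal. rewrite map_map, <- IH, map_map. reflexivity.
Qed.

Lemma splits_pairs {A} (F : list A -> A -> list A -> A -> list A -> Cx) (l : list A) :
  sm (splits l) (fun t => match t with (p, y, s) =>
      sm (splits s) (fun t' => match t' with (p3, z, s3) => F p y p3 z s3 end) end)
  = sm (splits l) (fun t => match t with (p', z, s3) =>
      sm (splits p') (fun t' => match t' with (p, y, p3) => F p y p3 z s3 end) end).
Proof.
  revert F; induction l as [|a l IH]; intros F; [reflexivity|].
  simpl splits. rewrite !sm_cons, !sm_map. simpl. rewrite sm_nil.
  match goal with |- Cadd ?S1 (sm _ ?f1) = Cadd C0 (sm _ ?f2) =>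
    assert (E1 : sm (splits l) f1 = sm (splits l) (fun t => match t with (p,y,s) => sm (splits s) (fun t' => match t' with (p3,z,s3) => F (a::p) y p3 z s3 end) end))
     by (apply sm_ext; intros [[p x] s] _; reflexivity);
    assert (E2 : sm (splits l) f2 = sm (splits l) (fun t => Cadd (match t with (p',z,s3) => F [] a p' z s3 end) (match t with (p',z,s3) => sm (splits p') (fun t' => match t' with (p,y,p3) => F (a::p) y p3 z s3 end) end)))
     by (apply sm_ext; intros [[p x] s] _; simpl; rewrite sm_cons, sm_map; f_equal; apply sm_ext; intros [[p' y] s'] _; reflexivity);
    assert (E3 : S1 = sm (splits l) (fun t => match t with (p', z, s3) => F [] a p' z s3 end))
     by (apply sm_ext; intros [[p x] s] _; reflexivity)
  end.
  rewrite E1, E2, IH, sm_add. try rewrite E3. ring.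
Qed.

End A2.
Import A2.

Module A3.

Section Alg.
Variable P : NCPS.
Implicit Types x y z : P.

Lemma add0l x : aadd azero x = x.
Proof. rewrite ax_addC. apply ax_add0. Qed.

Lemma opp_unique x y : aadd x y = azero -> y = aopp x.
Proof.
  intros H. rewrite <- (ax_add0 P y), <- (ax_addN P x), ax_addA, (ax_addC P y x), H. apply add0l.
Qed.

Lemma smul0 x : asmul C0 x = azero.
Proof.
  set (y := asmul C0 x).
  assert (E : y = aadd y y).
  { unfold y. rewrite <- ax_smulDl. f_equal. apply Cx_ext; simpl; ring. }
  transitivity (aadd (aadd y y) (aopp y)).
  - rewrite <- ax_addA, ax_addN, ax_add0; reflexivity.
  - rewrite <- E; apply ax_addN.
Qed.

Lemma opp_smul x : aopp x = asmul (Copp C1) x.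
Proof.
  symmetry. apply opp_unique. rewrite <- (ax_smul1 P x) at 1. rewrite <- ax_smulDl.
  replace (Cadd C1 (Copp C1)) with C0 by ring. apply smul0.
Qed.

Lemma smul_zero a : asmul a (@azero P) = azero.
Proof. rewrite <- (smul0 (@azero P)) at 1. rewrite ax_smulA. replace (Cmul a C0) with C0 by ring. apply smul0. Qed.

Lemma mul0r x : amul x azero = azero.
Proof. rewrite <- (smul0 (@azero P)) at 1. rewrite <- ax_smulMr. apply smul0. Qed.
Lemma mul0l x : amul azero x = azero.
Proof. rewrite <- (smul0 (@azero P)) at 1. rewrite <- ax_smulMl. apply smul0. Qed.

Lemma phi0 : phi (@azero P) = C0.
Proof. rewrite <- (smul0 (@azero P)) at 1. rewrite ax_phiZ. ring. Qed.

Lemma phi_opp x : phi (aopp x) = Copp (phi x).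
Proof. rewrite opp_smul, ax_phiZ. ring. Qed.

Lemma star0 : astar (@azero P) = azero.
Proof. rewrite <- (smul0 (@azero P)) at 1. rewrite ax_starZ. replace (Cconj C0) with C0 by (apply Cx_ext; simpl; ring). apply smul0. Qed.

Lemma star1 : astar (@aone P) = aone.
Proof.
  assert (E : @aone P = amul (astar aone) (astar (astar aone))).
  { rewrite <- ax_starM, ax_mul1r, ax_starK. reflexivity. }
  symmetry. rewrite E at 1. rewrite ax_starK, ax_mul1r. reflexivity.
Qed.

Lemma asum_app (l1 l2 : list P) : asum P (l1 ++ l2) = aadd (asum P l1) (asum P l2).
Proof. induction l1; simpl. now rewrite add0l. rewrite IHl1, ax_addA. reflexivity. Qed.

Lemma phi_asum (l : list P) : phi (asum P l) = csum (map phi l).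
Proof. induction l; simpl. apply phi0. rewrite ax_phiD, IHl. reflexivity. Qed.

Lemma phi_asum_sm {A} (f : A -> P) l : phi (asum P (map f l)) = sm l (fun a => phi (f a)).
Proof. rewrite phi_asum. unfold sm. now rewrite map_map. Qed.

Lemma mul_asum_l (l : list P) y : amul (asum P l) y = asum P (map (fun x => amul x y) l).
Proof. induction l; simpl. apply mul0l. rewrite ax_mulDl, IHl. reflexivity. Qed.
Lemma mul_asum_r (l : list P) y : amul y (asum P l) = asum P (map (fun x => amul y x) l).
Proof. induction l; simpl. apply mul0r. rewrite ax_mulDr, IHl. reflexivity. Qed.

Lemma star_asum (l : list P) : astar (asum P l) = asum P (map astar l).
Proof. induction l; simpl. apply star0. rewrite ax_starD, IHl. reflexivity. Qed.

Lemma aprod_app (l1 l2 : list P) : aprod P (l1 ++ l2) = amul (aprod P l1) (aprod P l2).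
Proof. induction l1; simpl. now rewrite ax_mul1l. rewrite IHl1, ax_mulA. reflexivity. Qed.

Lemma star_aprod (l : list P) : astar (aprod P l) = aprod P (rev (map astar l)).
Proof.
  induction l; simpl. apply star1. rewrite ax_starM, IHl, aprod_app. simpl. now rewrite ax_mul1r.
Qed.

Lemma asum_map_ext {A} (f g : A -> P) l : (forall a, In a l -> f a = g a) ->
  asum P (map f l) = asum P (map g l).
Proof. intros H; f_equal; apply map_ext_in; auto. Qed.

Lemma smul_asum a (l : list P) : asmul a (asum P l) = asum P (map (asmul a) l).
Proof. induction l; simpl. apply smul_zero. rewrite ax_smulDr, IHl. reflexivity. Qed.

Definition Ci : Cx := mkC 0 1.

Lemma phi_star x : phi (astar x) = Cconj (phi x).
Proof.
  assert (H1 : Im (phi x) + Im (phi (astar x)) = 0).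
  { destruct (ax_phi_pos P (aadd aone x)) as [H _].
    rewrite ax_starD, star1, ax_mulDl, !ax_mulDr, !ax_phiD, !ax_mul1l, !ax_mul1r, ax_phi1 in H.
    destruct (ax_phi_pos P x) as [H' _]. simpl in H.  lra. }
  assert (H2 : Re (phi x) - Re (phi (astar x)) = 0).
  { destruct (ax_phi_pos P (aadd aone (asmul Ci x))) as [H _].
    rewrite ax_starD, star1, ax_starZ, ax_mulDl, !ax_mulDr, !ax_phiD, !ax_mul1l, !ax_mul1r, ax_phi1 in H.
    rewrite <- ax_smulMl, <- ax_smulMr, ax_smulA, !ax_phiZ in H.
    destruct (ax_phi_pos P x) as [H' _]. simpl in H. lra. }
  apply Cx_ext; simpl; lra.
Qed.

End Alg.

End A3.
Import A3.

Module A4.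

Lemma even_false_of n : (exists m, n = 2*m+1)%nat -> Nat.even n = false.
Proof. intros H. rewrite <- Nat.negb_odd. apply Bool.negb_false_iff. apply Nat.odd_spec. exact H. Qed.
Lemma even_true_to n : Nat.even n = true -> exists m, n = (2*m)%nat.
Proof. intros H; apply Nat.even_spec in H; exact H. Qed.
Lemma even_false_to n : Nat.even n = false -> exists m, n = (2*m+1)%nat.
Proof. intros H. apply Nat.odd_spec. rewrite <- Nat.negb_even, H. reflexivity. Qed.

Lemma flat_map_nil {A B} (f : A -> list B) l : (forall x, In x l -> f x = []) -> flat_map f l = [].
Proof. induction l; simpl; intros H; auto. rewrite H by auto. apply IHl; auto. Qed.

Lemma flat_map_ext_in {A B} (f g : A -> list B) l : (forall x, In x l -> f x = g x) -> flat_map f l = flat_map g l.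
Proof. induction l; simpl; intros H; auto. rewrite H by auto. f_equal. apply IHl; auto. Qed.

Lemma ncp_odd f l : Nat.even (length l) = false -> ncp f l = [].
Proof.
  revert l; induction f as [|f IH]; intros l H; destruct l as [|x r]; try reflexivity;
    try (simpl in H; discriminate).
  - cbn [ncp]. apply flat_map_nil. intros k Hk. apply in_seq in Hk.
    destruct (Nat.even k) eqn:Ek; [|reflexivity].
    destruct (nth_error r k) as [y|]; [|reflexivity].
    apply flat_map_nil. intros p1 _. rewrite IH; [reflexivity|].
    rewrite length_skipn. simpl length in H.
    apply even_false_to in H. apply even_true_to in Ek. destruct H as [a Ha], Ek as [b Hb].
    apply even_false_of. exists (a - b - 1)%nat. lia.
Qed.

Lemma ncp_fuel f1 f2 l : (length l <= f1)%nat -> (length l <= f2)%nat -> ncp f1 l = ncp f2 l.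
Proof.
  revert f2 l; induction f1 as [|f1 IH]; intros f2 l H1 H2; destruct l as [|x r];
    try (destruct f2; reflexivity).
  - simpl in H1; lia.
  - destruct f2 as [|f2]; [simpl in H2; lia|]. cbn [ncp]. simpl length in *.
    apply flat_map_ext_in. intros k Hk. apply in_seq in Hk.
    destruct (Nat.even k); [|reflexivity]. destruct (nth_error r k) as [y|]; [|reflexivity].
    rewrite (IH f2 (firstn k r)). apply flat_map_ext_in. intros p1 _.
    rewrite (IH f2 (skipn (S k) r)). reflexivity.
    all: try rewrite length_skipn; try rewrite length_firstn; lia.
Qed.

Lemma cprod_app l1 l2 : cprod (l1 ++ l2) = Cmul (cprod l1) (cprod l2).
Proof. induction l1; simpl; [ring| rewrite IHl1; ring]. Qed.

Section NC.
Variable K : R -> R -> Cx.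

Definition Gv (v : nat -> R) (f : nat) (l : list nat) : Cx :=
  csum (map (fun pi => cprod (map (fun pq => K (v (fst pq)) (v (snd pq))) pi)) (ncp f l)).

Lemma Gv_cons v f x r :
  Gv v (S f) (x :: r) = sm (seq 0 (length r)) (fun k =>
     if Nat.even k then match nth_error r k with
        | Some y => Cmul (K (v x) (v y)) (Cmul (Gv v f (firstn k r)) (Gv v f (skipn (S k) r)))
        | None => C0 end else C0).
Proof.
  unfold Gv. cbn [ncp]. rewrite csum_map_sm, sm_flat_map. apply sm_ext. intros k _.
  destruct (Nat.even k); [|reflexivity]. destruct (nth_error r k) as [y|]; [|reflexivity].
  rewrite sm_flat_map, !csum_map_sm, <- sm_scalr, <- sm_scal. apply sm_ext; intros p1 _.
  rewrite sm_map, <- !sm_scal. apply sm_ext; intros p2 _. simpl. rewrite map_app, cprod_app. ring.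
Qed.

Lemma Gv_inv f : forall v v' l l', map v l = map v' l' -> Gv v f l = Gv v' f l'.
Proof.
  induction f as [|f IH]; intros v v' l l' E.
  - destruct l, l'; try discriminate; reflexivity.
  - destruct l as [|x r], l' as [|x' r']; try discriminate; [reflexivity|].
    simpl in E. injection E as E1 E2.
    rewrite !Gv_cons. assert (Hl : length r = length r') by (rewrite <- (length_map v), E2; apply length_map).
    rewrite Hl. apply sm_ext. intros k Hk. apply in_seq in Hk.
    destruct (Nat.even k); [|reflexivity].
    assert (Hn : forall d : nat, map v (firstn k r) = map v' (firstn k r') /\ map v (skipn (S k) r) = map v' (skipn (S k) r') /\
       option_map v (nth_error r k) = option_map v' (nth_error r' k)).
    { intros _. rewrite <- !firstn_map, <- !skipn_map, <- !nth_error_map, E2. auto. }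
    destruct (Hn 0%nat) as (F1 & F2 & F3).
    destruct (nth_error r k) as [y|] eqn:Ey, (nth_error r' k) as [y'|] eqn:Ey'; simpl in F3; try discriminate; [|reflexivity].
    injection F3 as F3. rewrite E1, F3, (IH _ _ _ _ F1), (IH _ _ _ _ F2). reflexivity.
Qed.

Definition Hm (ts : list R) : Cx := Gv (fun i => nth i ts 0) (length ts) (seq 0 (length ts)).

Lemma map_nth_seq0 (ts : list R) d : map (fun i => nth i ts d) (seq 0 (length ts)) = ts.
Proof.
  induction ts as [|t ts IH]; [reflexivity|]. simpl length. simpl seq. rewrite <- seq_shift.
  simpl. f_equal. rewrite map_map. exact IH.
Qed.

Lemma Gv_Hm v f l : (length l <= f)%nat -> Gv v f l = Hm (map v l).
Proof.
  intros H. unfold Hm. rewrite length_map.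
  unfold Gv at 1. rewrite (ncp_fuel f (length l) l H (le_n _)). fold (Gv v (length l) l).
  apply Gv_inv. rewrite <- (length_map v l). rewrite map_nth_seq0. reflexivity.
Qed.

Lemma Hm_odd ts : Nat.even (length ts) = false -> Hm ts = C0.
Proof. intros H. unfold Hm, Gv. rewrite ncp_odd; [reflexivity|]. now rewrite length_seq. Qed.

Lemma Hm_nil : Hm [] = C1.
Proof. unfold Hm, Gv. simpl. apply Cx_ext; simpl; ring. Qed.

Lemma Hm_cons t ts : Hm (t :: ts) =
  sm (splits ts) (fun u => match u with (p, x, s) => Cmul (K t x) (Cmul (Hm p) (Hm s)) end).
Proof.
  unfold Hm at 1. simpl length. simpl seq. rewrite Gv_cons, length_seq.
  rewrite <- (splits_seq ts 0), sm_map. apply sm_ext. intros k Hk. apply in_seq in Hk.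
  rewrite nth_error_seq. replace (k <? length ts)%nat with true by (symmetry; apply Nat.ltb_lt; lia).
  set (v := fun i => nth i (t :: ts) 0).
  assert (Ev : map v (seq 1 (length ts)) = ts).
  { unfold v. rewrite <- seq_shift, map_map. simpl. apply map_nth_seq0. }
  rewrite !Gv_Hm, <- firstn_map, <- skipn_map, Ev.
  2,3: first [rewrite length_skipn | rewrite length_firstn]; rewrite length_seq; lia.
  unfold v. simpl nth.
  destruct (Nat.even k) eqn:Ek; [reflexivity|].
  rewrite (Hm_odd (firstn k ts)). ring.
  rewrite length_firstn, Nat.min_l by lia. exact Ek.
Qed.

End NC.

End A4.
Import A4.

Module A5.

Lemma splits_In {A} (l : list A) p x s : In (p, x, s) (splits l) -> l = p ++ x :: s.
Proof.
  revert p x s; induction l as [|a l IH]; intros p x s H; [destruct H|].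
  destruct H as [H|H]; [injection H as <- <- <-; reflexivity|].
  apply in_map_iff in H. destruct H as [[[p' x'] s'] [E Hin]]. injection E as <- <- <-.
  rewrite (IH _ _ _ Hin). reflexivity.
Qed.

Lemma asum_flat_map {P : NCPS} {A} (f : A -> list P) l :
  asum P (flat_map f l) = asum P (map (fun a => asum P (f a)) l).
Proof. induction l; simpl; [reflexivity|]. rewrite asum_app, IHl. reflexivity. Qed.

Lemma asum_map_flat_map {P : NCPS} {A B} (f : B -> P) (g : A -> list B) l :
  asum P (map f (flat_map g l)) = asum P (map (fun a => asum P (map f (g a))) l).
Proof. induction l; simpl; [reflexivity|]. rewrite map_app, asum_app, IHl. reflexivity. Qed.

Section XL.
Variable P : NCPS.
Variable T : R.
Variable X : R -> P.

Definition inr (t : R) : Prop := 0 <= t <= T.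
Definition Mx (ts : list R) : Cx := phi (aprod P (map X ts)).

Lemma M_Hm ts : semicircular P T X -> Forall inr ts -> Mx ts = Hm (Kov P X) ts.
Proof.
  intros [_ HS] H. unfold Mx. rewrite (HS ts H).
  destruct (Nat.even (length ts)) eqn:E; [reflexivity|]. symmetry. apply Hm_odd. exact E.
Qed.

Lemma Forall_app_inv {A} (Q : A -> Prop) l1 l2 : Forall Q (l1 ++ l2) -> Forall Q l1 /\ Forall Q l2.
Proof. intros H; rewrite Forall_app in H; exact H. Qed.

Lemma M_SD t ts : semicircular P T X -> Forall inr (t :: ts) ->
  Mx (t :: ts) = sm (splits ts) (fun u => match u with (p, x, s) => Cmul (Kov P X t x) (Cmul (Mx p) (Mx s)) end).
Proof.
  intros HS H. rewrite M_Hm, Hm_cons by auto. apply sm_ext. intros [[p x] s] Hin.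
  apply splits_In in Hin. subst ts. inversion H; subst.
  apply Forall_app_inv in H3. destruct H3 as [H3 H4]. inversion H4; subst.
  rewrite !M_Hm by auto. reflexivity.
Qed.

Definition E (h : step) : list (Cx * R) :=
  flat_map (fun a => match a with (al, a0, b) => [(RC al, b); (Copp (RC al), a0)] end) h.

Fixpoint Ew (w : word) : list (Cx * list R) :=
  match w with
  | [] => [(C1, [])]
  | h :: w' => flat_map (fun c => map (fun c' => (Cmul (fst c) (fst c'), snd c :: snd c')) (Ew w')) (E h)
  end.

Lemma Xh_E h : Xh P X h = asum P (map (fun c => asmul (fst c) (X (snd c))) (E h)).
Proof.
  induction h as [|[[al a0] b] h IH]; [reflexivity|].
  unfold Xh in *. simpl. rewrite IH. unfold asub.
  rewrite ax_smulDr, opp_smul, ax_smulA, <- ax_addA. do 3 f_equal. ring.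
Qed.

Lemma smul_mul a b (x y : P) : amul (asmul a x) (asmul b y) = asmul (Cmul a b) (amul x y).
Proof. rewrite <- ax_smulMl, <- ax_smulMr, ax_smulA. reflexivity. Qed.

Lemma ev_Ew w : ev P X w = asum P (map (fun c => asmul (fst c) (aprod P (map X (snd c)))) (Ew w)).
Proof.
  induction w as [|h w IH]; unfold ev in *; simpl.
  - rewrite ax_smul1, ax_add0. reflexivity.
  - rewrite IH, Xh_E, mul_asum_l, asum_map_flat_map, map_map. f_equal. apply map_ext. intros c.
    rewrite mul_asum_r, !map_map. f_equal. apply map_ext. intros c'. simpl. apply smul_mul.
Qed.

Definition Phi (w : word) : Cx := phi (ev P X w).

Lemma Phi_Ew w : Phi w = sm (Ew w) (fun c => Cmul (fst c) (Mx (snd c))).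
Proof. unfold Phi. rewrite ev_Ew, phi_asum_sm. apply sm_ext. intros; rewrite ax_phiZ. reflexivity. Qed.

Lemma E_inr h : step_ok T h -> forall c, In c (E h) -> inr (snd c).
Proof.
  induction h as [|[[al a0] b] h IH]; intros H c Hc; [destruct Hc|].
  inversion H; subst. destruct H2 as (G1 & G2 & G3).
  simpl in Hc. destruct Hc as [<-|[<-|Hc]]; unfold inr; simpl; try lra. apply IH; auto.
Qed.

Lemma Ew_inr w : Forall (step_ok T) w -> forall c, In c (Ew w) -> Forall inr (snd c).
Proof.
  induction w as [|h w IH]; intros H c Hc.
  - destruct Hc as [<-|[]]. constructor.
  - inversion H; subst. simpl in Hc. apply in_flat_map in Hc. destruct Hc as [c1 [K1 K2]].
    apply in_map_iff in K2. destruct K2 as [c2 [<- K3]]. simpl. constructor.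
    apply (E_inr h); auto. apply IH; auto.
Qed.

Lemma sm_E (F : Cx * R -> Cx) h :
  sm (E h) F = sm h (fun a => match a with (al, a0, b) => Cadd (F (RC al, b)) (F (Copp (RC al), a0)) end).
Proof.
  unfold E. rewrite sm_flat_map. apply sm_ext. intros [[al a0] b] _. simpl. rewrite !sm_cons, sm_nil. ring.
Qed.

Lemma ipH_E h k : ipH P X h k =
  sm (E h) (fun c => sm (E k) (fun c2 => Cmul (Cmul (fst c) (fst c2)) (Kov P X (snd c) (snd c2)))).
Proof.
  unfold ipH. rewrite csum_sm, sm_flat_map, sm_E. apply sm_ext. intros [[al a0] b] _.
  rewrite sm_map, !sm_E, <- sm_add. apply sm_ext. intros [[be c0] d] _. simpl.
  apply Cx_ext; simpl; ring.
Qed.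

End XL.

End A5.
Import A5.

Module A6.

Section S6.
Variable P : NCPS.
Variable T : R.
Variable X : R -> P.

Lemma Ew_splits (w : word) : forall (G : list R -> R -> list R -> Cx),
  sm (Ew w) (fun c => Cmul (fst c) (sm (splits (snd c)) (fun u => match u with (p,x,s) => G p x s end)))
  = sm (splits w) (fun u => match u with (p,h,s) =>
      sm (Ew p) (fun c1 => sm (E h) (fun c2 => sm (Ew s) (fun c3 =>
        Cmul (Cmul (fst c1) (Cmul (fst c2) (fst c3))) (G (snd c1) (snd c2) (snd c3))))) end).
Proof.
  induction w as [|h w IH]; intros G.
  - cbn [Ew splits]. rewrite sm_cons, !sm_nil. simpl fst. simpl snd. simpl splits. rewrite sm_nil. ring.
  - simpl Ew. simpl splits. rewrite sm_flat_map, sm_cons, sm_map.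
    transitivity (sm (E h) (fun c0 => Cadd
       (sm (Ew w) (fun c' => Cmul (Cmul (fst c0) (fst c')) (G [] (snd c0) (snd c'))))
       (Cmul (fst c0) (sm (Ew w) (fun c' => Cmul (fst c') (sm (splits (snd c')) (fun u => match u with (p,x,s) => G (snd c0 :: p) x s end))))))).
    { apply sm_ext; intros c0 _. rewrite sm_map, <- sm_scal, <- sm_add. apply sm_ext; intros c' _.
      simpl. rewrite sm_cons, sm_map.
      rewrite (sm_ext _ (fun u => match u with (p, x, s) => G (snd c0 :: p) x s end) (splits (snd c'))).
      2:{ intros [[p x] s] _; reflexivity. }
      ring. }
    rewrite sm_add. f_equal.
    + simpl. rewrite sm_cons, sm_nil. rewrite Cadd0r. apply sm_ext; intros c0 _. apply sm_ext; intros c' _. simpl. ring.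
    + idtac.
      rewrite (sm_ext _ (fun c0 => Cmul (fst c0) (sm (splits w) (fun u => match u with (p,h0,s) =>
      sm (Ew p) (fun c1 => sm (E h0) (fun c2 => sm (Ew s) (fun c3 =>
        Cmul (Cmul (fst c1) (Cmul (fst c2) (fst c3))) (G (snd c0 :: snd c1) (snd c2) (snd c3))))) end)))).
      2:{ intros c0 _. f_equal. apply (IH (fun p x s => G (snd c0 :: p) x s)). }
      rewrite (sm_ext _ (fun c0 => sm (splits w) (fun u => Cmul (fst c0) (match u with (p,h0,s) =>
      sm (Ew p) (fun c1 => sm (E h0) (fun c2 => sm (Ew s) (fun c3 =>
        Cmul (Cmul (fst c1) (Cmul (fst c2) (fst c3))) (G (snd c0 :: snd c1) (snd c2) (snd c3))))) end)))).
      2:{ intros c0 _. rewrite sm_scal. reflexivity. }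
      rewrite sm_swap. apply sm_ext. intros [[p h0] s] _. simpl.
      rewrite sm_flat_map. apply sm_ext; intros c0 _.
      rewrite sm_map, <- sm_scal. apply sm_ext; intros c1 _.
      rewrite <- sm_scal. apply sm_ext; intros c2 _.
      rewrite <- sm_scal. apply sm_ext; intros c3 _. simpl. ring.
Qed.

Lemma Phi_SD h w : semicircular P T X -> step_ok T h -> Forall (step_ok T) w ->
  Phi P X (h :: w) = sm (splits w) (fun u => match u with (p,x,s) =>
     Cmul (ipH P X h x) (Cmul (Phi P X p) (Phi P X s)) end).
Proof.
  intros HS Hh Hw.
  rewrite Phi_Ew. simpl Ew. rewrite sm_flat_map.
  transitivity (sm (E h) (fun c0 => Cmul (fst c0) (sm (Ew w) (fun c' => Cmul (fst c')
     (sm (splits (snd c')) (fun u => match u with (p,x,s) =>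
        (fun p x s => Cmul (Kov P X (snd c0) x) (Cmul (Mx P X p) (Mx P X s))) p x s end)))))).
  { apply sm_ext; intros c0 H0. rewrite sm_map, <- sm_scal. apply sm_ext; intros c' H'. simpl.
    rewrite (M_SD P T X). 2: exact HS. ring.
    constructor; [eapply E_inr; eauto | eapply Ew_inr; eauto]. }
  transitivity (sm (E h) (fun c0 => sm (splits w) (fun u => Cmul (fst c0) (match u with (p,h0,s) =>
      sm (Ew p) (fun c1 => sm (E h0) (fun c2 => sm (Ew s) (fun c3 =>
        Cmul (Cmul (fst c1) (Cmul (fst c2) (fst c3)))
          (Cmul (Kov P X (snd c0) (snd c2)) (Cmul (Mx P X (snd c1)) (Mx P X (snd c3))))))) end)))).
  { apply sm_ext; intros c0 _. rewrite sm_scal. f_equal.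
    apply (Ew_splits w (fun p x s => Cmul (Kov P X (snd c0) x) (Cmul (Mx P X p) (Mx P X s)))). }
  rewrite sm_swap. apply sm_ext. intros [[p x] s] _.
  rewrite ipH_E, !Phi_Ew, <- sm_scalr. apply sm_ext; intros c0 _.
  transitivity (sm (Ew p) (fun c1 => sm (E x) (fun c2 => sm (Ew s) (fun c3 =>
     Cmul (fst c0) (Cmul (Cmul (fst c1) (Cmul (fst c2) (fst c3)))
                (Cmul (Kov P X (snd c0) (snd c2)) (Cmul (Mx P X (snd c1)) (Mx P X (snd c3))))))))).
  { rewrite <- sm_scal. apply sm_ext; intros c1 _. rewrite <- sm_scal. apply sm_ext; intros c2 _.
    rewrite <- sm_scal. reflexivity. }
  rewrite sm_swap, <- sm_scalr. apply sm_ext; intros c2 _.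
  rewrite <- (sm_scalr _ _ (Ew p)), <- (sm_scal _ _ (Ew p)). apply sm_ext; intros c1 _.
  rewrite <- (sm_scal _ _ (Ew s)), <- (sm_scal _ _ (Ew s)). apply sm_ext; intros c3 _. ring.
Qed.

End S6.

End A6.
Import A6.

Module A7.

Lemma sm_rev {A} (f : A -> Cx) l : sm (rev l) f = sm l f.
Proof. induction l; simpl; [reflexivity|]. rewrite sm_app, sm_cons, sm_cons, sm_nil, IHl. ring. Qed.

Lemma splits_cons {A} (a : A) l : splits (a :: l) = ([], a, l) :: map (fun t => match t with (p, y, s) => (a :: p, y, s) end) (splits l).
Proof. reflexivity. Qed.

Lemma splits_rev {A} (l : list A) :
  splits (rev l) = rev (map (fun u => match u with (p, x, s) => (rev s, x, rev p) end) (splits l)).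
Proof.
  induction l as [|a l IH]; [reflexivity|].
  change (rev (a :: l)) with (rev l ++ [a]). rewrite splits_app, IH, splits_cons.
  simpl splits. rewrite (map_cons _ _ (map _ (splits l))). cbn [map rev].
  rewrite map_rev, !map_map, app_nil_r. f_equal.
  f_equal. apply map_ext. intros [[p x] s]. simpl. reflexivity.
Qed.

Lemma DXw_splits (w : word) : DXw w = map (fun u => match u with (p, x, s) => (p, s, x) end) (splits w).
Proof. unfold DXw. rewrite <- (splits_seq w []), map_map. reflexivity. Qed.

Section S7.
Variable P : NCPS.
Variable T : R.
Variable X : R -> P.

Notation Phi := (Phi P X).
Notation ipH := (ipH P X).
Notation ev := (ev P X).

Lemma ev_app w1 w2 : ev (w1 ++ w2) = amul (ev w1) (ev w2).
Proof. unfold Defs.ev. rewrite map_app, aprod_app. reflexivity. Qed.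

Lemma Phi_rot w1 w2 : Phi (w1 ++ w2) = Phi (w2 ++ w1).
Proof. unfold A5.Phi. rewrite !ev_app. apply ax_phiT. Qed.

Lemma Phi_nil : Phi [] = C1.
Proof. unfold A5.Phi, Defs.ev. simpl. apply ax_phi1. Qed.

Lemma Xh_self h : semicircular P T X -> step_ok T h -> astar (Xh P X h) = Xh P X h.
Proof.
  intros [HS _] Hh. induction h as [|[[al a0] b] h IH]; simpl.
  - apply star0.
  - inversion Hh; subst. destruct H1 as (G1 & G2 & G3).
    unfold Xh in *. simpl. rewrite ax_starD, IH by auto. f_equal.
    unfold asub. rewrite ax_starZ, ax_starD, opp_smul, ax_starZ, !HS by lra.
    f_equal. apply Cx_ext; simpl; ring. f_equal. f_equal. apply Cx_ext; simpl; ring.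
Qed.

Lemma star_ev w : semicircular P T X -> Forall (step_ok T) w -> astar (ev w) = ev (rev w).
Proof.
  intros HS Hw. unfold Defs.ev. rewrite star_aprod, map_map, <- map_rev. f_equal.
  apply map_ext_in. intros h Hin. apply Xh_self; auto. rewrite Forall_forall in Hw. apply Hw.
  apply in_rev; exact Hin.
Qed.

Lemma Phi_conj w : semicircular P T X -> Forall (step_ok T) w -> Cconj (Phi w) = Phi (rev w).
Proof. intros HS Hw. unfold A5.Phi. rewrite <- phi_star, star_ev; auto. Qed.

Lemma ipH_Phi h k : semicircular P T X -> step_ok T h -> step_ok T k -> ipH h k = Phi [h; k].
Proof.
  intros HS Hh Hk. rewrite Phi_SD with (T := T); auto. simpl. rewrite sm_cons, sm_nil, Phi_nil. ring.
Qed.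

Lemma ipH_sym h k : ipH h k = ipH k h.
Proof.
  rewrite !ipH_E. rewrite sm_swap. apply sm_ext; intros c _. apply sm_ext; intros c' _.
  unfold Kov. rewrite ax_phiT. ring.
Qed.

Lemma ipH_real h k : semicircular P T X -> step_ok T h -> step_ok T k -> Cconj (ipH h k) = ipH h k.
Proof.
  intros HS Hh Hk. rewrite ipH_Phi, Phi_conj; auto. simpl. rewrite <- ipH_Phi, ipH_sym; auto.
  rewrite ipH_Phi; auto.
Qed.

Lemma phi_evstar a a' : semicircular P T X -> Forall (step_ok T) a' ->
  phi (amul (ev a) (astar (ev a'))) = Phi (a ++ rev a').
Proof. intros HS H. rewrite star_ev, <- ev_app; auto. Qed.

Definition evFC (L : list (Cx * word)) : P := asum P (map (fun u => asmul (fst u) (ev (snd u))) L).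

Lemma evFC_app L1 L2 : evFC (L1 ++ L2) = aadd (evFC L1) (evFC L2).
Proof. unfold evFC. rewrite map_app, asum_app. reflexivity. Qed.

Definition dFC (t : Cx * word * word * step) : list (Cx * word) :=
  match t with (c, m1, m2, h) =>
    (c, m1 ++ h :: m2) :: map (fun y => match y with (c', a, b, d, k) =>
        (Copp (Cmul (Cmul c' (ipH k h)) (Phi b)), a ++ d) end) (D1F c m1 m2 ++ D2F c m1 m2)
  end.

Lemma delta_FC t : delta_term P X t = evFC (dFC t).
Proof.
  destruct t as [[[c m1] m2] h]. unfold delta_term, dFC, evFC. simpl map. simpl asum.
  unfold asub. f_equal.
  - rewrite ev_app. unfold Defs.ev. simpl. rewrite ax_mulA. reflexivity.
  - rewrite opp_smul, smul_asum, !map_map. f_equal. apply map_ext. intros [[[[c' a] b] d] k].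
    simpl. rewrite ev_app, !ax_smulA. f_equal. unfold A5.Phi. ring.
Qed.

Lemma deltaX_FC U : deltaX P X U = evFC (flat_map dFC U).
Proof.
  unfold deltaX. induction U as [|t U IH]; [reflexivity|]. simpl. rewrite evFC_app, IH, delta_FC. reflexivity.
Qed.

Lemma phi_FC L1 L2 : semicircular P T X -> Forall (fun u => Forall (step_ok T) (snd u)) L2 ->
  phi (amul (evFC L1) (astar (evFC L2))) =
  sm L1 (fun u => sm L2 (fun v => Cmul (Cmul (fst u) (Cconj (fst v))) (Phi (snd u ++ rev (snd v))))).
Proof.
  intros HS H2. unfold evFC. rewrite star_asum, mul_asum_l, map_map, phi_asum_sm. apply sm_ext; intros u _.
  rewrite map_map, mul_asum_r, map_map, phi_asum_sm. apply sm_ext; intros v Hv.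
  rewrite ax_starZ, smul_mul, ax_phiZ, star_ev. rewrite <- ev_app. reflexivity. auto.
  rewrite Forall_forall in H2. apply H2; auto.
Qed.

End S7.

End A7.
Import A7.

Module A8.

Section S8.
Variable P : NCPS.
Variable T : R.
Variable X : R -> P.
Notation Phi := (Phi P X).
Notation ipH := (ipH P X).
Notation dFC := (dFC P X).

Lemma Dual c a b h W : semicircular P T X -> step_ok T h -> Forall (step_ok T) a ->
  Forall (step_ok T) b -> Forall (step_ok T) W ->
  sm (dFC (c, a, b, h)) (fun u => Cmul (fst u) (Phi (snd u ++ W))) =
  Cmul c (sm (splits W) (fun u => match u with (p, x, s) => Cmul (ipH h x) (Cmul (Phi (b ++ p)) (Phi (s ++ a))) end)).
Proof.
  intros HS Hh Ha Hb HW.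
  unfold A7.dFC. rewrite sm_cons, sm_map, sm_app. unfold D1F, D2F. rewrite !sm_map, !DXw_splits, !sm_map.
  simpl fst. simpl snd.
  rewrite <- (app_assoc a (h :: b) W), (Phi_rot P X a ((h :: b) ++ W)).
  replace (((h :: b) ++ W) ++ a) with (h :: (b ++ W ++ a)) by (simpl; rewrite app_assoc; reflexivity).
  rewrite (Phi_SD P T X h (b ++ W ++ a)) by (auto; rewrite !Forall_app; auto).
  rewrite (splits_app b (W ++ a)), (splits_app W a), !sm_app, !sm_map, sm_app, !sm_map.
  match goal with |- Cadd (Cmul c (Cadd ?Sb (Cadd ?SW ?Sa))) (Cadd ?Ca ?Cb) = Cmul c ?R =>
    assert (E1 : Ca = Copp (Cmul c Sa)); [| assert (E2 : Cb = Copp (Cmul c Sb)); [| assert (E3 : SW = R);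
      [| rewrite E1, E2, E3; ring]]] end.
  - rewrite <- sm_scal, <- sm_opp. apply sm_ext; intros [[p x] s] _. simpl.
    rewrite <- (app_assoc p b W), (Phi_rot P X p (b ++ W)), <- (app_assoc b W p), (ipH_sym P X x h). ring.
  - rewrite <- sm_scal, <- sm_opp. apply sm_ext; intros [[p x] s] _. simpl.
    rewrite <- (app_assoc a s W), (Phi_rot P X a (s ++ W)), <- (app_assoc s W a), (ipH_sym P X x h). ring.
  - apply sm_ext; intros [[p x] s] _. reflexivity.
Qed.
End S8.

End A8.
Import A8.

Module A9.

Lemma splits_Forall {A} (Q : A -> Prop) l p x s : In (p, x, s) (splits l) -> Forall Q l ->
  Forall Q p /\ Q x /\ Forall Q s.
Proof.
  intros Hin H. apply splits_In in Hin. subst l. rewrite Forall_app in H. destruct H as [H1 H2].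
  inversion H2; subst. auto.
Qed.

Lemma sm_swap_m {A B} (F : list A -> A -> list A -> B -> Cx) l1 (l2 : list B) :
  sm l1 (fun u => match u with (p, y, s) => sm l2 (fun v => F p y s v) end) =
  sm l2 (fun v => sm l1 (fun u => match u with (p, y, s) => F p y s v end)).
Proof.
  rewrite <- sm_swap. apply sm_ext. intros [[p y] s] _. reflexivity.
Qed.

Ltac redm := cbv beta iota zeta delta [fst snd].

Lemma sm_lin {A} k d (f g : A -> Cx) l : (forall x, In x l -> Cmul k (f x) = Cmul d (g x)) ->
  Cmul k (sm l f) = Cmul d (sm l g).
Proof. intros H. rewrite <- !sm_scal. apply sm_ext; auto. Qed.

Lemma shape2 k c d s1 s2 t1 t2 : Cmul (Cmul k c) s1 = Cmul d t1 -> Cmul (Cmul k c) s2 = Cmul d t2 ->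
  Cmul (Copp k) (Cmul c (Cadd s1 s2)) = Copp (Cmul d (Cadd t1 t2)).
Proof. intros H1 H2. transitivity (Copp (Cadd (Cmul (Cmul k c) s1) (Cmul (Cmul k c) s2))); [ring|]. rewrite H1, H2; ring. Qed.

Lemma shape3 k q s1 s2 s3 t1 t2 t3 : Cmul (Cmul k q) s1 = Cmul C1 t1 -> Cmul (Cmul k q) s2 = Cmul C1 t2 ->
  Cmul (Cmul k q) s3 = Cmul C1 t3 -> Cmul k (Cmul q (Cadd s1 (Cadd s2 s3))) = Cadd (Cadd t1 t2) t3.
Proof. intros H1 H2 H3. transitivity (Cadd (Cadd (Cmul (Cmul k q) s1) (Cmul (Cmul k q) s2)) (Cmul (Cmul k q) s3)); [ring|].
  rewrite H1, H2, H3; ring. Qed.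

Lemma shape3' k q s1 s2 s3 t1 t2 t3 : Cmul (Cmul k q) s1 = Cmul C1 t1 -> Cmul (Cmul k q) s2 = Cmul C1 t2 ->
  Cmul (Cmul k q) s3 = Cmul C1 t3 -> Cmul k (Cmul (Cadd s1 (Cadd s2 s3)) q) = Cadd (Cadd t1 t2) t3.
Proof. intros H1 H2 H3. transitivity (Cadd (Cadd (Cmul (Cmul k q) s1) (Cmul (Cmul k q) s2)) (Cmul (Cmul k q) s3)); [ring|].
  rewrite H1, H2, H3; ring. Qed.

Section S9.
Variable P : NCPS.
Variable T : R.
Variable X : R -> P.
Notation Phi := (Phi P X).
Notation ipH := (ipH P X).
Notation dFC := (dFC P X).
Notation ok := (step_ok T).

Lemma dFC_ok c m1 m2 h : ok h -> Forall ok m1 -> Forall ok m2 ->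
  forall v, In v (dFC (c, m1, m2, h)) -> Forall ok (snd v).
Proof.
  intros Hh H1 H2 v Hv. simpl in Hv. destruct Hv as [<-|Hv].
  - simpl. rewrite Forall_app. auto.
  - apply in_map_iff in Hv. destruct Hv as [[[[[c' a] b] d] k] [<- Hin]]. simpl.
    apply in_app_or in Hin. unfold D1F, D2F in Hin. rewrite !DXw_splits, !map_map in Hin.
    destruct Hin as [Hin|Hin]; apply in_map_iff in Hin; destruct Hin as [[[p x] s] [E Hs]];
      injection E as <- <- <- <- <-; destruct (splits_Forall _ _ _ _ _ Hs ltac:(eassumption)) as (G1 & G2 & G3);
      rewrite Forall_app; auto.
Qed.

Definition Dsum (a b : word) (h : step) (W : word) : Cx :=
  sm (splits W) (fun u => match u with (p, x, s) => Cmul (ipH h x) (Cmul (Phi (b ++ p)) (Phi (s ++ a))) end).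

Section Core.
Variables (a b A B : word) (h h' : step).
Hypothesis HS : semicircular P T X.
Hypotheses (Hh : ok h) (Hh' : ok h') (Ha : Forall ok a) (Hb : Forall ok b) (HA : Forall ok A) (HB : Forall ok B).

Definition KK y z := Cmul (ipH h y) (ipH h' z).

Definition SA_B := sm (splits A) (fun u => match u with (p', y, s') => sm (splits B) (fun u' => match u' with (p2, z, s2) =>
  Cmul (KK y z) (Cmul (Phi (b ++ p')) (Cmul (Phi p2) (Phi (s2 ++ a ++ s')))) end) end).
Definition X1 := sm (splits A) (fun u => match u with (p', y, s') => sm (splits a) (fun u' => match u' with (pa, z, sa) =>
  Cmul (KK y z) (Cmul (Phi (b ++ p')) (Cmul (Phi (B ++ pa)) (Phi (sa ++ s')))) end) end).
Definition SA_s := sm (splits A) (fun u => match u with (p', y, s') => sm (splits s') (fun u' => match u' with (p3, z, s3) =>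
  Cmul (KK y z) (Cmul (Phi (b ++ p')) (Cmul (Phi (B ++ a ++ p3)) (Phi s3))) end) end).
Definition SB_p := sm (splits B) (fun u => match u with (pB, y, sB) => sm (splits pB) (fun u' => match u' with (p4, z, s4) =>
  Cmul (KK y z) (Cmul (Phi (sB ++ a)) (Cmul (Phi p4) (Phi (s4 ++ b ++ A)))) end) end).
Definition X2 := sm (splits B) (fun u => match u with (pB, y, sB) => sm (splits b) (fun u' => match u' with (pb, z, sb) =>
  Cmul (KK y z) (Cmul (Phi (sB ++ a)) (Cmul (Phi (pB ++ pb)) (Phi (sb ++ A)))) end) end).
Definition SB_A := sm (splits B) (fun u => match u with (pB, y, sB) => sm (splits A) (fun u' => match u' with (p5, z, s5) =>
  Cmul (KK y z) (Cmul (Phi (sB ++ a)) (Cmul (Phi (pB ++ b ++ p5)) (Phi s5))) end) end).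
Definition Nt := Cmul (ipH h h') (Cmul (Phi (b ++ A)) (Phi (B ++ a))).

Definition C1p := sm (splits A) (fun u => match u with (p', y, s') => sm (splits p') (fun u' => match u' with (pp, x, ss) =>
  Cmul (Cmul (ipH y h') (Phi s')) (Cmul (ipH h x) (Cmul (Phi (b ++ pp)) (Phi (ss ++ B ++ a)))) end) end).
Definition C1B := sm (splits A) (fun u => match u with (p', y, s') => sm (splits B) (fun u' => match u' with (pB, x, sB) =>
  Cmul (Cmul (ipH y h') (Phi s')) (Cmul (ipH h x) (Cmul (Phi (b ++ p' ++ pB)) (Phi (sB ++ a)))) end) end).
Definition C2A := sm (splits B) (fun u => match u with (p', y, s') => sm (splits A) (fun u' => match u' with (pA, x, sA) =>
  Cmul (Cmul (ipH y h') (Phi p')) (Cmul (ipH h x) (Cmul (Phi (b ++ pA)) (Phi (sA ++ s' ++ a)))) end) end).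
Definition C2s := sm (splits B) (fun u => match u with (p', y, s') => sm (splits s') (fun u' => match u' with (pp, x, ss) =>
  Cmul (Cmul (ipH y h') (Phi p')) (Cmul (ipH h x) (Cmul (Phi (b ++ A ++ pp)) (Phi (ss ++ a)))) end) end).

Lemma eq_SA_B : SA_B = C2A.
Proof.
  unfold SA_B, C2A. etransitivity; [apply sm_swap_m|]. apply sm_ext; intros [[p2 z] s2] _. apply sm_ext; intros [[p' y] s'] _.
  unfold KK. rewrite (app_assoc s2 a s'), (Phi_rot P X (s2 ++ a) s'), (ipH_sym P X z h'). ring.
Qed.

Lemma eq_SA_s : SA_s = C1p.
Proof.
  unfold SA_s, C1p.
  rewrite (splits_pairs (fun p y p3 z s3 => Cmul (KK y z) (Cmul (Phi (b ++ p)) (Cmul (Phi (B ++ a ++ p3)) (Phi s3)))) A).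
  apply sm_ext; intros [[p' z] s3] _. apply sm_ext; intros [[pp x] ss] _.
  unfold KK. rewrite (app_assoc B a ss), (Phi_rot P X (B ++ a) ss), (ipH_sym P X z h'). ring.
Qed.

Lemma eq_SB_p : SB_p = C2s.
Proof.
  unfold SB_p, C2s.
  transitivity (sm (splits B) (fun u => match u with (p', z, s3) => sm (splits p') (fun u' => match u' with (p, y, p3) =>
     (fun p y p3 z s3 => Cmul (KK z y) (Cmul (Phi (s3 ++ a)) (Cmul (Phi p) (Phi (p3 ++ b ++ A))))) p y p3 z s3 end) end)).
  { apply sm_ext; intros [[p' z] s3] _. apply sm_ext; intros [[p y] p3] _. reflexivity. }
  rewrite <- (splits_pairs (fun p y p3 z s3 => Cmul (KK z y) (Cmul (Phi (s3 ++ a)) (Cmul (Phi p) (Phi (p3 ++ b ++ A))))) B).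
  apply sm_ext; intros [[p' y] s'] _. apply sm_ext; intros [[pp x] ss] _.
  unfold KK. rewrite (Phi_rot P X pp (b ++ A)), <- (app_assoc b A pp), (ipH_sym P X y h'). ring.
Qed.

Lemma eq_SB_A : SB_A = C1B.
Proof.
  unfold SB_A, C1B. etransitivity; [apply sm_swap_m|]. apply sm_ext; intros [[p5 z] s5] _. apply sm_ext; intros [[pB y] sB] _.
  unfold KK. rewrite (Phi_rot P X pB (b ++ p5)), <- (app_assoc b p5 pB), (ipH_sym P X z h'). ring.
Qed.

Lemma L1 : Dsum a b h (A ++ h' :: B) = Cadd (Cadd (Cadd (Cadd SA_B X1) SA_s) Nt) (Cadd (Cadd SB_p X2) SB_A).
Proof.
  unfold Dsum. rewrite (splits_app A (h' :: B)), sm_app, !sm_map, splits_cons, sm_cons, sm_map.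
  match goal with |- Cadd ?SA (Cadd ?N ?SB) = _ =>
    assert (E1 : SA = Cadd (Cadd SA_B X1) SA_s); [|assert (E2 : N = Nt); [|assert (E3 : SB = Cadd (Cadd SB_p X2) SB_A); [|rewrite E1, E2, E3; ring]]] end.
  - unfold SA_B, X1, SA_s. rewrite <- !sm_add. apply sm_ext; intros [[p' y] s'] Hin. redm.
    destruct (splits_Forall _ _ _ _ _ Hin HA) as (G1 & G2 & G3).
    rewrite <- (app_assoc s' (h' :: B) a), (Phi_rot P X s' ((h' :: B) ++ a)).
    change (((h' :: B) ++ a) ++ s') with (h' :: ((B ++ a) ++ s')). rewrite <- (app_assoc B a s').
    rewrite (Phi_SD P T X h' (B ++ a ++ s')) by (auto; rewrite !Forall_app; auto).
    rewrite (splits_app B (a ++ s')), sm_app, !sm_map, (splits_app a s'), sm_app, !sm_map.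
    apply shape3; apply sm_lin; intros [[pp z] ss] _; redm; unfold KK; ring.
  - unfold Nt. redm. rewrite app_nil_r. reflexivity.
  - unfold SB_p, X2, SB_A. rewrite <- !sm_add. apply sm_ext; intros [[pB y] sB] Hin. redm.
    destruct (splits_Forall _ _ _ _ _ Hin HB) as (G1 & G2 & G3).
    rewrite (app_assoc b A (h' :: pB)), (Phi_rot P X (b ++ A) (h' :: pB)).
    change ((h' :: pB) ++ b ++ A) with (h' :: (pB ++ b ++ A)).
    rewrite (Phi_SD P T X h' (pB ++ b ++ A)) by (auto; rewrite !Forall_app; auto).
    rewrite (splits_app pB (b ++ A)), sm_app, !sm_map, (splits_app b A), sm_app, !sm_map.
    apply shape3'; apply sm_lin; intros [[pp z] ss] _; redm; unfold KK; ring.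
Qed.

Lemma Qcore c c' :
  sm (dFC (c, a, b, h)) (fun u => sm (dFC (c', A, B, h')) (fun v =>
      Cmul (Cmul (fst u) (fst v)) (Phi (snd u ++ snd v)))) =
  Cmul (Cmul c c') (Cadd Nt (Cadd X1 X2)).
Proof.
  rewrite sm_swap.
  transitivity (sm (dFC (c', A, B, h')) (fun v => Cmul (fst v) (Cmul c (Dsum a b h (snd v))))).
  { apply sm_ext; intros v Hv. unfold Dsum. rewrite <- (Dual P T X c a b h (snd v)); auto.
    2: apply (dFC_ok c' A B h'); auto.
    rewrite <- sm_scal. apply sm_ext; intros u _. ring. }
  unfold A7.dFC at 1. rewrite sm_cons, sm_map, sm_app. unfold D1F, D2F. rewrite !sm_map, !DXw_splits, !sm_map.
  redm.
  match goal with |- Cadd ?M (Cadd ?S1 ?S2) = _ =>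
    assert (E1 : S1 = Copp (Cmul (Cmul c' c) (Cadd C1p C1B)));
    [| assert (E2 : S2 = Copp (Cmul (Cmul c' c) (Cadd C2A C2s))); [| rewrite E1, E2, L1] ] end.
  - unfold C1p, C1B. rewrite <- sm_add, <- sm_scal, <- sm_opp. apply sm_ext; intros [[p' y] s'] Hin. redm.
    unfold Dsum. rewrite (splits_app p' B), sm_app, !sm_map.
    apply shape2; apply sm_lin; intros [[pp x] ss] _; redm.
    + rewrite <- (app_assoc ss B a). ring.
    + ring.
  - unfold C2A, C2s. rewrite <- sm_add, <- sm_scal, <- sm_opp. apply sm_ext; intros [[p' y] s'] Hin. redm.
    unfold Dsum. rewrite (splits_app A s'), sm_app, !sm_map.
    apply shape2; apply sm_lin; intros [[pp x] ss] _; redm.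
    + rewrite <- (app_assoc ss s' a). ring.
    + ring.
  - rewrite eq_SA_B, eq_SA_s, eq_SB_p, eq_SB_A. ring.
Qed.

End Core.
End S9.

End A9.
Import A9.

Module A10.

Lemma Cconj_mul z w : Cconj (Cmul z w) = Cmul (Cconj z) (Cconj w).
Proof. apply Cx_ext; simpl; ring. Qed.
Lemma Cconj_add z w : Cconj (Cadd z w) = Cadd (Cconj z) (Cconj w).
Proof. apply Cx_ext; simpl; ring. Qed.
Lemma Cconj_opp z : Cconj (Copp z) = Copp (Cconj z).
Proof. apply Cx_ext; simpl; ring. Qed.
Lemma Cconj_invol z : Cconj (Cconj z) = z.
Proof. apply Cx_ext; simpl; ring. Qed.
Lemma Cconj_sm {A} (f : A -> Cx) l : Cconj (sm l f) = sm l (fun x => Cconj (f x)).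
Proof. induction l; [apply Cx_ext; simpl; ring|]. rewrite !sm_cons, Cconj_add, IHl. reflexivity. Qed.
Lemma Re_add z w : Re (Cadd z w) = Re z + Re w.
Proof. reflexivity. Qed.

Section Schur.
Variable P : NCPS.
Variable I : Type.

Definition qf (K : I -> I -> Cx) (L : list (Cx * I)) : Cx :=
  sm L (fun u => sm L (fun v => Cmul (Cmul (fst u) (Cconj (fst v))) (K (snd u) (snd v)))).

Definition PSD (K : I -> I -> Cx) : Prop := forall L, 0 <= Re (qf K L).

Lemma PSD_one : PSD (fun _ _ => C1).
Proof.
  intros L. unfold qf.
  transitivity (Re (Cmul (sm L fst) (Cconj (sm L fst)))).
  - destruct (sm L fst) as [x y]. simpl. nra.
  - right. f_equal. rewrite Cconj_sm, <- sm_scalr. apply sm_ext; intros u _.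
    rewrite <- sm_scal. apply sm_ext; intros v _. ring.
Qed.

Definition Sq (K : I -> I -> Cx) (L : list (Cx * I * P)) : Cx :=
  sm L (fun u => sm L (fun v => Cmul (Cmul (Cmul (fst (fst u)) (Cconj (fst (fst v)))) (K (snd (fst u)) (snd (fst v))))
     (phi (amul (snd u) (astar (snd v)))))).

Lemma Sq_zero_head K w x L : Sq K ((w, x, azero) :: L) = Sq K L.
Proof.
  unfold Sq. rewrite sm_cons. simpl fst. simpl snd. rewrite sm_cons, mul0l, phi0.
  rewrite (sm_ext _ (fun _ => C0) L). 2:{ intros v _. rewrite mul0l, phi0. ring. }
  rewrite sm_zero.
  rewrite (sm_ext _ (fun u => Cadd C0 (sm L (fun v => Cmul (Cmul (Cmul (fst (fst u)) (Cconj (fst (fst v)))) (K (snd (fst u)) (snd (fst v))))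
     (phi (amul (snd u) (astar (snd v))))))) L).
  2:{ intros u _. rewrite sm_cons. simpl fst. simpl snd. rewrite star0, mul0r, phi0. f_equal. ring. }
  rewrite sm_add, sm_zero. ring.
Qed.

Lemma phi_g a a' s s' (a1 : P) :
  phi (amul (aadd a (asmul s a1)) (astar (aadd a' (asmul s' a1)))) =
  Cadd (Cadd (phi (amul a (astar a'))) (Cmul (Cconj s') (phi (amul a (astar a1)))))
       (Cadd (Cmul s (phi (amul a1 (astar a')))) (Cmul (Cmul s (Cconj s')) (phi (amul a1 (astar a1))))).
Proof.
  rewrite ax_starD, ax_starZ, ax_mulDl, !ax_mulDr, !ax_phiD.
  rewrite <- ax_smulMr, <- ax_smulMl, <- ax_smulMl, <- ax_smulMr, ax_smulA, !ax_phiZ. ring.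
Qed.

Lemma phi_self_real (x : P) : phi (amul x (astar x)) = RC (Re (phi (amul x (astar x)))) /\ 0 <= Re (phi (amul x (astar x))).
Proof.
  rewrite ax_phiT. destruct (ax_phi_pos P x) as [H1 H2]. split; auto.
  apply Cx_ext; simpl; auto.
Qed.

Lemma schur_aux K : PSD K -> forall n L, length L = n -> 0 <= Re (Sq K L).
Proof.
  intros HK n. induction n as [|n IH]; intros L HL.
  - destruct L; [|discriminate]. unfold Sq. simpl. lra.
  - destruct L as [|[[w1 x1] a1] L]; [discriminate|]. simpl in HL. injection HL as HL.
    destruct (phi_self_real a1) as [HN HN0].
    set (r := Re (phi (amul a1 (astar a1)))) in *.
    destruct (Req_dec r 0) as [Hr|Hr].
    + assert (a1 = azero).
      { apply ax_phi_faithful. rewrite <- ax_phiT, HN, Hr. apply Cx_ext; reflexivity. }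
      subst a1. rewrite Sq_zero_head. apply IH; auto.
    + set (beta := fun a : P => Cmul (RC (/ r)) (phi (amul a (astar a1)))).
      set (g := fun a : P => aadd a (asmul (Copp (beta a)) a1)).
      assert (Hb : forall a, Cmul (beta a) (RC r) = phi (amul a (astar a1))).
      { intros a. unfold beta. apply Cx_ext; simpl; field; auto. }
      assert (Hb' : forall a, Cmul (Cconj (beta a)) (RC r) = phi (amul a1 (astar a))).
      { intros a. rewrite <- (ax_starK P a1) at 1. rewrite <- ax_starM, phi_star, <- Hb, Cconj_mul.
        f_equal. apply Cx_ext; simpl; ring. }
      assert (Hdec : forall a a', phi (amul a (astar a')) =
                Cadd (phi (amul (g a) (astar (g a')))) (Cmul (Cmul (beta a) (Cconj (beta a'))) (RC r))).
      { intros a a'. unfold g. rewrite phi_g, HN, <- Hb, <- Hb'. rewrite !Cconj_opp. ring. }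
      assert (Hg1 : g a1 = azero).
      { unfold g. assert (beta a1 = C1).
        { unfold beta. rewrite HN. apply Cx_ext; simpl; field; auto. }
        rewrite H, <- opp_smul, ax_addN. reflexivity. }
      set (L0 := (w1, x1, a1) :: L).
      assert (E : Sq K L0 = Cadd (Sq K (map (fun u => (fst u, g (snd u))) L0))
                    (Cmul (RC r) (qf K (map (fun u => (Cmul (fst (fst u)) (beta (snd u)), snd (fst u))) L0)))).
      { unfold Sq, qf. rewrite !sm_map, <- sm_scal, <- sm_add. apply sm_ext; intros u _.
        rewrite !sm_map, <- sm_scal, <- sm_add. apply sm_ext; intros v _. simpl.
        rewrite Hdec, Cconj_mul. ring. }
      rewrite E, Re_add. apply Rplus_le_le_0_compat.
      * unfold L0. simpl map. rewrite Hg1, Sq_zero_head.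
        apply IH. rewrite length_map; auto.
      * set (q := qf K _). assert (Hq : 0 <= Re q) by apply HK.
        change (Re (Cmul (RC r) q)) with (r * Re q - 0 * Im q). nra.
Qed.

Lemma schur K (f : I -> P) : PSD K -> PSD (fun x y => Cmul (K x y) (phi (amul (f x) (astar (f y))))).
Proof.
  intros HK L. pose proof (schur_aux K HK _ (map (fun u => (fst u, snd u, f (snd u))) L) eq_refl) as H.
  unfold Sq in H. rewrite !sm_map in H. unfold qf.
  erewrite sm_ext; [exact H|]. intros u _. simpl. rewrite sm_map. apply sm_ext; intros v _. simpl. ring.
Qed.

End Schur.

End A10.
Import A10.

Module A11.

Section S11.
Variable P : NCPS.
Variable T : R.
Variable X : R -> P.
Notation Phi := (Phi P X).
Notation ipH := (ipH P X).
Notation dFC := (dFC P X).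
Notation ok := (step_ok T).
Hypothesis HS : semicircular P T X.

Definition ldag (l : Cx * word * word * step) : Cx * word * word * step :=
  match l with (c, m1, m2, h) => (Cconj c, rev m2, rev m1, h) end.

Lemma Forall_rev' {A} (Q : A -> Prop) l : Forall Q l -> Forall Q (rev l).
Proof. intros H. apply Forall_rev. exact H. Qed.

Lemma dagger (F : Cx -> word -> Cx) c' m1 m2 h' : ok h' -> Forall ok m1 -> Forall ok m2 ->
  sm (dFC (c', m1, m2, h')) (fun v => F (Cconj (fst v)) (rev (snd v))) =
  sm (dFC (ldag (c', m1, m2, h'))) (fun v => F (fst v) (snd v)).
Proof.
  intros Hh H1 H2. unfold ldag, A7.dFC. rewrite !sm_cons, !sm_map, !sm_app.
  unfold D1F, D2F. rewrite !sm_map, !DXw_splits, !sm_map, !splits_rev, !sm_rev, !sm_map. redm.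
  rewrite (rev_app_distr m1 (h' :: m2)). change (rev (h' :: m2)) with (rev m2 ++ [h']).
  rewrite <- (app_assoc (rev m2) [h'] (rev m1)). simpl ([h'] ++ rev m1).
  match goal with |- Cadd ?M (Cadd ?S1 ?S2) = Cadd ?M' (Cadd ?T1 ?T2) =>
    assert (E1 : S1 = T2); [|assert (E2 : S2 = T1); [| rewrite E1, E2; ring]] end.
  - apply sm_ext; intros [[p y] s] Hin. redm. destruct (splits_Forall _ _ _ _ _ Hin H1) as (G1 & G2 & G3).
    rewrite Cconj_opp, !Cconj_mul, (ipH_real P T X) by auto. rewrite (Phi_conj P T X) by auto.
    rewrite rev_app_distr. reflexivity.
  - apply sm_ext; intros [[p y] s] Hin. redm. destruct (splits_Forall _ _ _ _ _ Hin H2) as (G1 & G2 & G3).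
    rewrite Cconj_opp, !Cconj_mul, (ipH_real P T X) by auto. rewrite (Phi_conj P T X) by auto.
    rewrite rev_app_distr. reflexivity.
Qed.

Definition Ufun (i l : Cx * word * word * step) : Cx :=
  match i, l with (c, a, b, h), (c', a', b', h') =>
    Cmul (Cmul c (Cconj c')) (Cadd (Nt P X a b (rev b') (rev a') h h')
       (Cadd (X1 P X a b (rev b') (rev a') h h') (X2 P X a b (rev b') (rev a') h h'))) end.

Lemma term_ok U : Uelt_ok T U -> forall i, In i U -> match i with (c, a, b, h) => ok h /\ Forall ok a /\ Forall ok b end.
Proof. intros H i Hi. unfold Uelt_ok in H. rewrite Forall_forall in H. apply H in Hi. destruct i as [[[c a] b] h]. exact Hi. Qed.

Lemma LHS_expr U : Uelt_ok T U ->
  phi (amul (deltaX P X U) (astar (deltaX P X U))) = sm U (fun i => sm U (fun l => Ufun i l)).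
Proof.
  intros HU. rewrite deltaX_FC, (phi_FC P T X).
  2: exact HS.
  2:{ rewrite Forall_forall. intros v Hv. apply in_flat_map in Hv. destruct Hv as [i [Hi Hv]].
      pose proof (term_ok U HU i Hi) as Hi'. destruct i as [[[c a] b] h]. destruct Hi' as (G1 & G2 & G3).
      exact (dFC_ok P T X c a b h G1 G2 G3 v Hv). }
  rewrite sm_flat_map. apply sm_ext; intros i Hi.
  rewrite (sm_ext _ (fun u => sm U (fun l => sm (dFC l) (fun v => Cmul (Cmul (fst u) (Cconj (fst v))) (Phi (snd u ++ rev (snd v))))))).
  2:{ intros u _. apply sm_flat_map. }
  rewrite sm_swap. apply sm_ext; intros l Hl.
  pose proof (term_ok U HU i Hi) as Hi'. pose proof (term_ok U HU l Hl) as Hl'.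
  destruct i as [[[c a] b] h], l as [[[c' a'] b'] h']. destruct Hi' as (G1 & G2 & G3), Hl' as (K1 & K2 & K3).
  transitivity (sm (dFC (c, a, b, h)) (fun u => sm (dFC (ldag (c', a', b', h'))) (fun v =>
      Cmul (Cmul (fst u) (fst v)) (Phi (snd u ++ snd v))))).
  { apply sm_ext; intros u _. exact (dagger (fun cv wv => Cmul (Cmul (fst u) cv) (Phi (snd u ++ wv))) c' a' b' h' K1 K2 K3). }
  simpl ldag. rewrite (Qcore P T X a b (rev b') (rev a') h h'); auto using Forall_rev'.
Qed.

End S11.

End A11.
Import A11.

Module A12.

Definition Vel := (Cx * word * word * word * step * step)%type.

Section S12.
Variable P : NCPS.
Variable T : R.
Variable X : R -> P.
Notation Phi := (Phi P X).
Notation ipH := (ipH P X).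
Notation ev := (ev P X).
Notation ok := (step_ok T).
Hypothesis HS : semicircular P T X.

Definition KV (x y : Vel) : Cx :=
  match x, y with (c, a, b, d, hs, ht), (c', a', b', d', hs', ht') =>
    Cmul (Cmul (ipH hs hs') (ipH ht ht'))
      (Cmul (Cmul c (Cconj c'))
        (Cmul (phi (amul (ev a) (astar (ev a'))))
          (Cmul (phi (amul (ev b) (astar (ev b')))) (phi (amul (ev d) (astar (ev d')))))))
  end.

Lemma normV2_KV V : normV2 P X V = sm V (fun x => sm V (fun y => KV x y)).
Proof.
  unfold normV2. rewrite csum_sm, sm_flat_map. apply sm_ext; intros [[[[[c a] b] d] hs] ht] _.
  rewrite sm_map. apply sm_ext; intros [[[[[c' a'] b'] d'] hs'] ht'] _. reflexivity.
Qed.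

Lemma ipH_XX h k : ipH h k = phi (amul (Xh P X h) (Xh P X k)).
Proof.
  rewrite ipH_E, !Xh_E, mul_asum_l, map_map, phi_asum_sm. apply sm_ext; intros c _.
  rewrite mul_asum_r, map_map, phi_asum_sm. apply sm_ext; intros c' _.
  rewrite smul_mul, ax_phiZ. reflexivity.
Qed.

Definition Vok (x : Vel) : Prop := match x with (c, a, b, d, hs, ht) => ok hs /\ ok ht end.

Lemma normV2_pos V : Forall Vok V -> 0 <= Re (normV2 P X V).
Proof.
  intros HV.
  set (K5 := fun x y : Vel =>
    Cmul (Cmul (Cmul (Cmul (Cmul C1
      (phi (amul (ev (match x with (c, a, b, d, hs, ht) => a end)) (astar (ev (match y with (c, a, b, d, hs, ht) => a end))))))
      (phi (amul (ev (match x with (c, a, b, d, hs, ht) => b end)) (astar (ev (match y with (c, a, b, d, hs, ht) => b end))))))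
      (phi (amul (ev (match x with (c, a, b, d, hs, ht) => d end)) (astar (ev (match y with (c, a, b, d, hs, ht) => d end))))))
      (phi (amul (Xh P X (match x with (c, a, b, d, hs, ht) => hs end)) (astar (Xh P X (match y with (c, a, b, d, hs, ht) => hs end))))))
      (phi (amul (Xh P X (match x with (c, a, b, d, hs, ht) => ht end)) (astar (Xh P X (match y with (c, a, b, d, hs, ht) => ht end)))))).
  assert (HK : PSD Vel K5).
  { unfold K5.
    apply (schur P Vel _ (fun x => Xh P X (match x with (c, a, b, d, hs, ht) => ht end))).
    apply (schur P Vel _ (fun x => Xh P X (match x with (c, a, b, d, hs, ht) => hs end))).
    apply (schur P Vel _ (fun x => ev (match x with (c, a, b, d, hs, ht) => d end))).
    apply (schur P Vel _ (fun x => ev (match x with (c, a, b, d, hs, ht) => b end))).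
    apply (schur P Vel _ (fun x => ev (match x with (c, a, b, d, hs, ht) => a end))).
    apply PSD_one. }
  specialize (HK (map (fun x => (match x with (c, a, b, d, hs, ht) => c end, x)) V)).
  unfold qf in HK. rewrite !sm_map in HK. rewrite normV2_KV.
  erewrite sm_ext; [exact HK|]. intros x Hx. simpl. rewrite sm_map. apply sm_ext; intros y Hy. simpl.
  rewrite Forall_forall in HV. pose proof (HV x Hx) as Hxo. pose proof (HV y Hy) as Hyo.
  destruct x as [[[[[c a] b] d] hs] ht], y as [[[[[c' a'] b'] d'] hs'] ht'].
  destruct Hyo as [Y1 Y2]. unfold K5, KV.
  rewrite !(Xh_self P T X) by auto. rewrite <- !ipH_XX. ring.
Qed.

Definition Ut := (Cx * word * word * step)%type.
Definition sw (x : Vel) : Vel := match x with (c, a, b, d, hs, ht) => (c, a, b, d, ht, hs) end.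
Definition negsw (x : Vel) : Vel := match x with (c, a, b, d, hs, ht) => (Copp c, a, b, d, ht, hs) end.
Definition aw (l : Ut) : word := match l with (c, a, b, h) => a end.
Definition bw (l : Ut) : word := match l with (c, a, b, h) => b end.

Lemma sm_D1U (f : Vel -> Cx) U : sm (D1U U) f =
  sm U (fun i => match i with (c, m1, m2, h) => sm (splits m1) (fun u => match u with (p, k, s) => f (c, p, s, m2, h, k) end) end).
Proof.
  unfold D1U. rewrite sm_flat_map. apply sm_ext; intros [[[c m1] m2] h] _.
  unfold D1F. rewrite !sm_map, DXw_splits, sm_map. apply sm_ext; intros [[p k] s] _. reflexivity.
Qed.

Lemma sm_D2U (f : Vel -> Cx) U : sm (D2U U) f =
  sm U (fun i => match i with (c, m1, m2, h) => sm (splits m2) (fun u => match u with (p, k, s) => f (c, m1, p, s, h, k) end) end).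
Proof.
  unfold D2U. rewrite sm_flat_map. apply sm_ext; intros [[[c m1] m2] h] _.
  unfold D2F. rewrite !sm_map, DXw_splits, sm_map. apply sm_ext; intros [[p k] s] _. reflexivity.
Qed.

Lemma swap_in3 {A B C} (L1 : list A) (M : A -> list B) (L2 : list C) (G : A -> B -> C -> Cx) :
  sm L1 (fun l => sm (M l) (fun v => sm L2 (fun u => G l v u))) =
  sm L2 (fun u => sm L1 (fun l => sm (M l) (fun v => G l v u))).
Proof.
  rewrite <- sm_swap. apply sm_ext; intros l _. apply sm_swap.
Qed.

Definition XX1 U := sm U (fun i => sm U (fun l => match i, l with (c, a, b, h), (c', a', b', h') =>
   Cmul (Cmul c (Cconj c')) (X1 P X a b (rev b') (rev a') h h') end)).
Definition XX2 U := sm U (fun i => sm U (fun l => match i, l with (c, a, b, h), (c', a', b', h') =>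
   Cmul (Cmul c (Cconj c')) (X2 P X a b (rev b') (rev a') h h') end)).
Definition NN U := sm U (fun i => sm U (fun l => match i, l with (c, a, b, h), (c', a', b', h') =>
   Cmul (Cmul c (Cconj c')) (Nt P X a b (rev b') (rev a') h h') end)).
Definition K12 U := sm (D1U U) (fun x => sm (D2U U) (fun y => KV x (sw y))).
Definition K21 U := sm (D2U U) (fun x => sm (D1U U) (fun y => KV (sw x) y)).

Definition T1 (i l : Ut) (v u : word * step * word) : Cx :=
  match i, l, v, u with (c, a, b, h), (c', a', b', h'), (pq, y, sq), (pa, z, sa) =>
   Cmul (Cmul c (Cconj c')) (Cmul (KK P X h h' y z) (Cmul (Phi (b ++ rev sq)) (Cmul (Phi (rev a' ++ pa)) (Phi (sa ++ rev pq)))))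
  end.

Lemma IdA U : Uelt_ok T U -> XX1 U = K12 U.
Proof.
  intros HU. unfold XX1, K12. rewrite sm_D1U. apply sm_ext; intros [[[c a] b] h] Hi.
  transitivity (sm U (fun l => sm (splits (bw l)) (fun v => sm (splits a) (fun u => T1 (c, a, b, h) l v u)))).
  { apply sm_ext; intros [[[c' a'] b'] h'] Hl. redm. unfold X1. rewrite splits_rev, sm_rev, sm_map, <- sm_scal.
    apply sm_ext; intros [[pq y] sq] _. redm. rewrite <- sm_scal. apply sm_ext; intros [[pa z] sa] _.
    reflexivity. }
  rewrite swap_in3. apply sm_ext; intros [[pa z] sa] Hu. redm.
  rewrite sm_D2U. apply sm_ext; intros [[[c' a'] b'] h'] Hl. simpl bw. apply sm_ext; intros [[pq y] sq] Hv. redm.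
  pose proof (term_ok T U HU _ Hl) as (K1 & K2 & K3).
  destruct (splits_Forall _ _ _ _ _ Hv K3) as (G1 & G2 & G3).
  unfold T1, KV, sw, KK. rewrite !(phi_evstar P T X) by auto.
  rewrite (Phi_rot P X pa (rev a')), (ipH_sym P X z h'). ring.
Qed.

Definition T2 (i l : Ut) (v u : word * step * word) : Cx :=
  match i, l, v, u with (c, a, b, h), (c', a', b', h'), (pp, y, sp), (pb, z, sb) =>
   Cmul (Cmul c (Cconj c')) (Cmul (KK P X h h' y z) (Cmul (Phi (rev pp ++ a)) (Cmul (Phi (rev sp ++ pb)) (Phi (sb ++ rev b')))))
  end.

Lemma IdB U : Uelt_ok T U -> XX2 U = K21 U.
Proof.
  intros HU. unfold XX2, K21. rewrite sm_D2U. apply sm_ext; intros [[[c a] b] h] Hi.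
  transitivity (sm U (fun l => sm (splits (aw l)) (fun v => sm (splits b) (fun u => T2 (c, a, b, h) l v u)))).
  { apply sm_ext; intros [[[c' a'] b'] h'] Hl. redm. unfold X2. rewrite splits_rev, sm_rev, sm_map, <- sm_scal.
    apply sm_ext; intros [[pp y] sp] _. redm. rewrite <- sm_scal. apply sm_ext; intros [[pb z] sb] _.
    reflexivity. }
  rewrite swap_in3. apply sm_ext; intros [[pb z] sb] Hu. redm.
  rewrite sm_D1U. apply sm_ext; intros [[[c' a'] b'] h'] Hl. simpl aw. apply sm_ext; intros [[pp y] sp] Hv. redm.
  pose proof (term_ok T U HU _ Hl) as (K1 & K2 & K3).
  destruct (splits_Forall _ _ _ _ _ Hv K2) as (G1 & G2 & G3).
  unfold T2, KV, sw, KK. rewrite !(phi_evstar P T X) by auto.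
  rewrite (Phi_rot P X a (rev pp)), (Phi_rot P X pb (rev sp)), (ipH_sym P X z h'). ring.
Qed.

Lemma IdC U : Uelt_ok T U -> NN U = normU2 P X U.
Proof.
  intros HU. unfold NN, normU2. rewrite csum_sm, sm_flat_map. apply sm_ext; intros [[[c a] b] h] Hi.
  rewrite sm_map. apply sm_ext; intros [[[c' a'] b'] h'] Hl. redm.
  pose proof (term_ok T U HU _ Hl) as (K1 & K2 & K3).
  rewrite !(phi_evstar P T X) by auto. unfold Nt. rewrite (Phi_rot P X (rev a') a). ring.
Qed.

Lemma IdD U : normV2 P X (D1U U ++ map negsw (D2U U)) =
  Cadd (Cadd (normV2 P X (D1U U)) (normV2 P X (D2U U))) (Copp (Cadd (K12 U) (K21 U))).
Proof.
  rewrite !normV2_KV. unfold K12, K21. rewrite !sm_app, !sm_map.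
  rewrite (sm_ext (fun x => sm (D1U U ++ map negsw (D2U U)) (fun y => KV x y))
                  (fun x => Cadd (sm (D1U U) (fun y => KV x y)) (Copp (sm (D2U U) (fun y => KV x (sw y)))))).
  2:{ intros x _. rewrite sm_app, sm_map. f_equal. rewrite <- sm_opp. apply sm_ext; intros y _.
      destruct x as [[[[[c a] b] d] hs] ht], y as [[[[[c' a'] b'] d'] hs'] ht']. unfold KV, negsw, sw; cbv beta iota zeta.
      rewrite Cconj_opp. ring. }
  rewrite (sm_ext (fun x => sm (D1U U ++ map negsw (D2U U)) (fun y => KV (negsw x) y))
                  (fun x => Cadd (Copp (sm (D1U U) (fun y => KV (sw x) y))) (sm (D2U U) (fun y => KV x y)))).
  2:{ intros x _. rewrite sm_app, sm_map. f_equal.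
      - rewrite <- sm_opp. apply sm_ext; intros y _.
        destruct x as [[[[[c a] b] d] hs] ht], y as [[[[[c' a'] b'] d'] hs'] ht']. unfold KV, negsw, sw; cbv beta iota zeta. ring.
      - apply sm_ext; intros y _.
        destruct x as [[[[[c a] b] d] hs] ht], y as [[[[[c' a'] b'] d'] hs'] ht']. unfold KV, negsw, sw; cbv beta iota zeta.
        rewrite Cconj_opp. ring. }
  rewrite !sm_add, !sm_opp. unfold Vel. ring.
Qed.

End S12.

End A12.
Import A12.


Lemma W_ok T U : Uelt_ok T U -> Forall (Vok T) (D1U U ++ map negsw (D2U U)).
Proof.
  intros HU. rewrite Forall_app, Forall_map. split; rewrite Forall_forall; intros x Hx.
  - unfold D1U in Hx. apply in_flat_map in Hx. destruct Hx as [i [Hi Hx]].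
    pose proof (term_ok T U HU i Hi) as Ti. destruct i as [[[c m1] m2] h]. destruct Ti as (G1 & G2 & G3).
    apply in_map_iff in Hx. destruct Hx as [[[[[c' p] s] m] k] [<- Hx]].
    unfold D1F in Hx. rewrite DXw_splits, map_map in Hx. apply in_map_iff in Hx.
    destruct Hx as [[[p0 k0] s0] [E Hs]]. injection E as <- <- <- <- <-.
    destruct (splits_Forall _ _ _ _ _ Hs G2) as (K1 & K2 & K3). simpl. auto.
  - unfold D2U in Hx. apply in_flat_map in Hx. destruct Hx as [i [Hi Hx]].
    pose proof (term_ok T U HU i Hi) as Ti. destruct i as [[[c m1] m2] h]. destruct Ti as (G1 & G2 & G3).
    apply in_map_iff in Hx. destruct Hx as [[[[[c' p] s] m] k] [<- Hx]].
    unfold D2F in Hx. rewrite DXw_splits, map_map in Hx. apply in_map_iff in Hx.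
    destruct Hx as [[[p0 k0] s0] [E Hs]]. injection E as <- <- <- <- <-.
    destruct (splits_Forall _ _ _ _ _ Hs G3) as (K1 & K2 & K3). simpl. auto.
Qed.

Theorem mainTheorem4 (P : NCPS) (T : R) (X : R -> P) (U : Uelt) :
  0 < T ->
  semicircular P T X ->
  Uelt_ok T U ->
  L2norm P (deltaX P X U) <= D12norm P X U.
Proof.
  intros HT HS HU. unfold L2norm, D12norm. apply sqrt_le_1_alt.
  rewrite (LHS_expr P T X HS U HU).
  assert (E : sm U (fun i => sm U (fun l => Ufun P X i l)) = Cadd (NN P X U) (Cadd (XX1 P X U) (XX2 P X U))).
  { unfold NN, XX1, XX2. rewrite <- !sm_add. apply sm_ext; intros i _. rewrite <- !sm_add. apply sm_ext; intros l _.
    destruct i as [[[c a] b] h], l as [[[c' a'] b'] h']. unfold Ufun. ring. }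
  rewrite E, (IdC P T X HS U HU), (IdA P T X HS U HU), (IdB P T X HS U HU).
  pose proof (normV2_pos P T X HS _ (W_ok T U HU)) as Hpos.
  rewrite IdD in Hpos. simpl in Hpos |- *. lra.
Qed.
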